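(* Let $\mathcal D=[x_{1/2},x_{N_x+1/2}]\times[z_{1/2},z_{N_z+1/2}]$ be partitioned into rectangles $K_{ij}=[x_{i-1/2},x_{i+1/2}]\times[z_{j-1/2},z_{j+1/2}]$, and let $V_h^k$ be the space of functions in $L^2(\mathcal D)$ whose restriction to each $K_{ij}$ is a polynomial of degree at most $k$; $\mathbf V_h^k$ denotes $M$-vectors with entries in $V_h^k$. Let $\mathbf A(\mathbf x)=(a_{kj}(\mathbf x))_{k,j=1}^M$ be a symmetric positive definite matrix function, smooth on each cell (possible discontinuities only along mesh lines), and let $\bar{\mathbf A}$ be the matrix whose $(k,l)$ entry is $\nabla a_{kl}$, so that $(\bar{\mathbf A}\mathbf v)_k=\sum_l v_l\nabla a_{kl}$. Consider the semi-discrete LDG scheme: find $\widehat{\mathbf v}_h(t)\in\mathbf V_h^k$ (twice differentiable in $t$) and $\widehat{\mathbf S}_h(t)\in(\mathbf V_h^k)^2$ (an $M\times 2$ matrix whose columns are in $\mathbf V_h^k$) such that for every cell $K=K_{ij}$ with outward unit normal $\boldsymbol\nu$, $$\int_K \partial_t^2\widehat{\mathbf v}_h\cdot\mathbf p_h\,d\mathbf x+\int_K\mathbf A\widehat{\mathbf S}_h\cdot\nabla\mathbf p_h\,d\mathbf x-\big(\mathbf A^-\widehat{\mathbf S}_h^-\boldsymbol\nu,\mathbf p_h\big)_{\partial K}=0\qquad\forall\mathbf p_h\in\mathbf V_h^k,$$ $$\int_K\widehat{\mathbf S}_h\cdot\mathbf w_h\,d\mathbf x+\int_K\mathbf A\widehat{\mathbf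 v}_h\cdot\operatorname{div}\mathbf w_h\,d\mathbf x+\int_K\bar{\mathbf A}\widehat{\mathbf v}_h\cdot\mathbf w_h\,d\mathbf x-\big(\mathbf A\widehat{\mathbf v}_h^+,\mathbf w_h\boldsymbol\nu\big)_{\partial K}=0\qquad\forall\mathbf w_h\in(\mathbf V_h^k)^2,$$ where in the last boundary term $\mathbf A$ is evaluated from inside $K$, and on each interior edge the superscript $-$ ($+$) denotes the trace from the left/lower (right/upper) neighbouring cell (alternating fluxes), with homogeneous Dirichlet boundary conditions $\widehat{\mathbf v}=0$ on $\partial\mathcal D$. Then the semi-discrete energy $$E_h(t)=\int_{\mathcal D}\Big(\partial_t\widehat{\mathbf v}_h\cdot\partial_t\widehat{\mathbf v}_h+\widehat{\mathbf S}_h\cdot\widehat{\mathbf S}_h\Big)d\mathbf x$$ is conserved by this scheme for all $t>0$, i.e. $\frac{d}{dt}E_h(t)=0$.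
   Context: The scheme discretizes the stochastic Galerkin (generalized polynomial chaos) system $\partial_t^2\widehat{\mathbf v}=\operatorname{div}(\mathbf A\widehat{\mathbf S})$, $\widehat{\mathbf S}=\mathbf A\nabla\widehat{\mathbf v}$ on $\mathcal D$ with $\widehat{\mathbf v}=0$ on $\partial\mathcal D$, where $a_{kj}(\mathbf x)=\int a(\mathbf x,\mathbf y)\Phi_k(\mathbf y)\Phi_j(\mathbf y)\rho(\mathbf y)d\mathbf y$ for orthonormal polynomials $\Phi_m$ with respect to the density $\rho$ of $\mathbf y$. Here ''$\cdot$'' denotes the Euclidean/Frobenius inner product of vectors or matrices, divergence and gradient act row-wise, and $\mathbf A^-$ is the matrix with entries $a_{kj}^-$. The analogous result holds with the other alternating choice ($\mathbf A^+\widehat{\mathbf S}_h^+$ and $\widehat{\mathbf v}_h^-$). *)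

(* Defs.v *)
From Stdlib Require Import Reals.
From Coquelicot Require Import Coquelicot.
Open Scope R_scope.

Fixpoint sumR (n : nat) (f : nat -> R) : R :=
  match n with O => 0 | S n' => sumR n' f + f n' end.

(* Polynomial in (x,z) of total degree <= k with coefficients c a b of x^a z^b. *)
Definition poly2 (k : nat) (c : nat -> nat -> R) (x z : R) : R :=
  sumR (S k) (fun a => sumR (S k - a) (fun b => c a b * x ^ a * z ^ b)).

Definition is_poly2 (k : nat) (f : R -> R -> R) : Prop :=
  exists c : nat -> nat -> R, forall x z, f x z = poly2 k c x z.

Definition pdx (f : R -> R -> R) : R -> R -> R :=
  fun x z => Derive (fun y => f y z) x.
Definition pdz (f : R -> R -> R) : R -> R -> R :=
  fun x z => Derive (fun y => f x y) z.
Definition grad (d : nat) (f : R -> R -> R) : R -> R -> R :=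
  match d with O => pdx f | _ => pdz f end.

(* Iterated partial derivatives; smooth2 f = all iterated partials exist
   and are (jointly) continuous, i.e. f is C^infinity on R^2. *)
Fixpoint iter_pd (w : list bool) (f : R -> R -> R) : R -> R -> R :=
  match w with
  | nil => f
  | cons b w' => (if b then pdx else pdz) (iter_pd w' f)
  end.
Definition smooth2 (f : R -> R -> R) : Prop :=
  forall (w : list bool) (x z : R),
    ex_derive (fun y => iter_pd w f y z) x /\
    ex_derive (fun y => iter_pd w f x y) z /\
    continuity_2d_pt (iter_pd w f) x z.

Definition cint (x0 x1 z0 z1 : R) (f : R -> R -> R) : R :=
  RInt (fun x => RInt (fun z => f x z) z0 z1) x0 x1.

(* Time derivatives of a time-dependent cellwise field
   v : R (time) -> nat (i) -> nat (j) -> nat (component) -> R -> R -> R. *)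
Definition dtv (v : R -> nat -> nat -> nat -> R -> R -> R) t i j m x z : R :=
  Derive (fun s => v s i j m x z) t.
Definition dttv (v : R -> nat -> nat -> nat -> R -> R -> R) t i j m x z : R :=
  Derive (fun s => dtv v s i j m x z) t.

Definition zero3 : nat -> R -> R -> R := fun _ _ _ => 0.

Definition AS_dot (M : nat) (A : nat -> nat -> R -> R -> R)
  (Sm : nat -> nat -> R -> R -> R) (d : nat) (x z : R)
  (q : nat -> R -> R -> R) : R :=
  sumR M (fun k => sumR M (fun l => A k l x z * Sm l d x z) * q k x z).

Definition Av_dot (M : nat) (A : nat -> nat -> R -> R -> R)
  (vv : nat -> R -> R -> R) (d : nat) (x z : R)
  (w : nat -> nat -> R -> R -> R) : R :=
  sumR M (fun k => sumR M (fun l => A k l x z * vv l x z) * w k d x z).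

(* Mesh data: nodes xs 0 < ... < xs Nx (x_{1/2},...,x_{Nx+1/2}), same for zs;
   cell (i,j) = [xs i, xs (i+1)] x [zs j, zs (j+1)], 0 <= i < Nx, 0 <= j < Nz.
   Coefficient a i j k l : the smooth restriction of a_kl to cell (i,j)
   (extended to R^2).  Fields: v t i j m x z, S t i j m d x z, on cell (i,j). *)

(* Boundary term (A^- S^- nu, p)_{dK} of the first equation.  The "-" trace
   comes from the left/lower neighbour; on dD the interior trace is used
   (Nat.pred 0 = 0). *)
Definition bnd1 (M : nat) (xs zs : nat -> R)
  (a : nat -> nat -> nat -> nat -> R -> R -> R)
  (Sh : nat -> nat -> nat -> nat -> R -> R -> R)
  (i j : nat) (q : nat -> R -> R -> R) : R :=
  RInt (fun z => AS_dot M (a i j) (Sh i j) 0 (xs (S i)) z q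
               - AS_dot M (a (Nat.pred i) j) (Sh (Nat.pred i) j) 0 (xs i) z q)
       (zs j) (zs (S j))
  + RInt (fun x => AS_dot M (a i j) (Sh i j) 1 x (zs (S j)) q
               - AS_dot M (a i (Nat.pred j)) (Sh i (Nat.pred j)) 1 x (zs j) q)
       (xs i) (xs (S i)).

(* Boundary term (A v^+, w nu)_{dK} of the second equation, A from inside K.
   The "+" trace comes from the right/upper neighbour; on dD the Dirichlet
   value 0 is used. *)
Definition bnd2 (M Nx Nz : nat) (xs zs : nat -> R)
  (a : nat -> nat -> nat -> nat -> R -> R -> R)
  (vh : nat -> nat -> nat -> R -> R -> R)
  (i j : nat) (w : nat -> nat -> R -> R -> R) : R :=
  let vR := if Nat.ltb (S i) Nx then vh (S i) j else zero3 in
  let vL := if Nat.ltb 0 i then vh i j else zero3 in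
  let vT := if Nat.ltb (S j) Nz then vh i (S j) else zero3 in
  let vB := if Nat.ltb 0 j then vh i j else zero3 in
  RInt (fun z => Av_dot M (a i j) vR 0 (xs (S i)) z w
               - Av_dot M (a i j) vL 0 (xs i) z w)
       (zs j) (zs (S j))
  + RInt (fun x => Av_dot M (a i j) vT 1 x (zs (S j)) w
               - Av_dot M (a i j) vB 1 x (zs j) w)
       (xs i) (xs (S i)).

Definition ldg_eq1 (M : nat) (xs zs : nat -> R)
  (a : nat -> nat -> nat -> nat -> R -> R -> R)
  (v : R -> nat -> nat -> nat -> R -> R -> R)
  (Sh : R -> nat -> nat -> nat -> nat -> R -> R -> R)
  (t : R) (i j : nat) (q : nat -> R -> R -> R) : Prop :=
  cint (xs i) (xs (S i)) (zs j) (zs (S j))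
    (fun x z =>
       sumR M (fun m => dttv v t i j m x z * q m x z)
     + sumR M (fun k => sumR 2 (fun d =>
          sumR M (fun l => a i j k l x z * Sh t i j l d x z) * grad d (q k) x z)))
  - bnd1 M xs zs a (Sh t) i j q = 0.

Definition ldg_eq2 (M Nx Nz : nat) (xs zs : nat -> R)
  (a : nat -> nat -> nat -> nat -> R -> R -> R)
  (v : R -> nat -> nat -> nat -> R -> R -> R)
  (Sh : R -> nat -> nat -> nat -> nat -> R -> R -> R)
  (t : R) (i j : nat) (w : nat -> nat -> R -> R -> R) : Prop :=
  cint (xs i) (xs (S i)) (zs j) (zs (S j))
    (fun x z =>
       sumR M (fun k => sumR 2 (fun d => Sh t i j k d x z * w k d x z))
     + sumR M (fun k =>
          sumR M (fun l => a i j k l x z * v t i j l x z)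
          * (pdx (w k 0%nat) x z + pdz (w k 1%nat) x z))
     + sumR M (fun k => sumR 2 (fun d =>
          sumR M (fun l => v t i j l x z * grad d (a i j k l) x z) * w k d x z)))
  - bnd2 M Nx Nz xs zs a (v t) i j w = 0.

Definition energy (M Nx Nz : nat) (xs zs : nat -> R)
  (v : R -> nat -> nat -> nat -> R -> R -> R)
  (Sh : R -> nat -> nat -> nat -> nat -> R -> R -> R) (t : R) : R :=
  sumR Nx (fun i => sumR Nz (fun j =>
    cint (xs i) (xs (S i)) (zs j) (zs (S j))
      (fun x z =>
         sumR M (fun m => dtv v t i j m x z * dtv v t i j m x z)
       + sumR M (fun m => sumR 2 (fun d => Sh t i j m d x z * Sh t i j m d x z))))).

(* Main.v *)
Require Import Defs.
From Stdlib Require Import Reals.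
From Coquelicot Require Import Coquelicot.
From Stdlib Require Import Lra Lia FunctionalExtensionality.
Open Scope R_scope.

Lemma sumR_ext n f g : (forall i, (i < n)%nat -> f i = g i) -> sumR n f = sumR n g.
Proof. induction n; simpl; intros H; [reflexivity|]. rewrite IHn by (intros; apply H; lia). rewrite H by lia. reflexivity. Qed.

Lemma sumR_S n f : sumR (S n) f = sumR n f + f n.
Proof. reflexivity. Qed.

Lemma sumR_plus n f g : sumR n (fun i => f i + g i) = sumR n f + sumR n g.
Proof. induction n; simpl; [lra|]. rewrite IHn. lra. Qed.

Lemma sumR_minus n f g : sumR n (fun i => f i - g i) = sumR n f - sumR n g.
Proof. induction n; simpl; [lra|]. rewrite IHn. lra. Qed.

Lemma sumR_scal_l n c f : sumR n (fun i => c * f i) = c * sumR n f.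
Proof. induction n; simpl; [lra|]. rewrite IHn. lra. Qed.

Lemma sumR_scal_r n c f : sumR n (fun i => f i * c) = sumR n f * c.
Proof. induction n; simpl; [lra|]. rewrite IHn. lra. Qed.

Lemma sumR_zero n f : (forall i, (i < n)%nat -> f i = 0) -> sumR n f = 0.
Proof. intros H. rewrite (sumR_ext n f (fun _ => 0)) by auto. induction n; simpl; [lra|]. rewrite IHn by (intros; apply H; lia). lra. Qed.

Lemma sumR_swap n m (f : nat -> nat -> R) :
  sumR n (fun i => sumR m (fun j => f i j)) = sumR m (fun j => sumR n (fun i => f i j)).
Proof. induction n; simpl. - symmetry; apply sumR_zero; auto.
  - rewrite IHn. rewrite <- sumR_plus. reflexivity. Qed.

Lemma sumR_add n m f : sumR (n + m) f = sumR n f + sumR m (fun j => f (n + j)%nat).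
Proof. induction m; simpl. - rewrite Nat.add_0_r; lra.
  - rewrite Nat.add_succ_r. simpl. rewrite IHm. lra. Qed.

Lemma sumR_mul n m f : sumR (n * m) f = sumR n (fun i => sumR m (fun j => f (i * m + j)%nat)).
Proof. induction n; simpl; [reflexivity|].
  rewrite Nat.add_comm, sumR_add, IHn. reflexivity. Qed.

Lemma sumR_le n f g : (forall i, (i < n)%nat -> f i <= g i) -> sumR n f <= sumR n g.
Proof. induction n; simpl; intros H; [lra|]. specialize (IHn (fun i Hi => H i ltac:(lia))). specialize (H n ltac:(lia)). lra. Qed.

Lemma sumR_ge0 n f : (forall i, (i < n)%nat -> 0 <= f i) -> 0 <= sumR n f.
Proof. intros H. rewrite <- (sumR_zero n (fun _ => 0)) by auto. apply sumR_le; auto. Qed.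

Lemma sumR_delta n m (h : nat -> R) : (m < n)%nat ->
  sumR n (fun i => if Nat.eqb i m then h i else 0) = h m.
Proof. induction n; intros Hm; [lia|]. simpl.
  destruct (Nat.eq_dec m n) as [->|Hne].
  - rewrite Nat.eqb_refl. rewrite sumR_zero; [lra|]. intros i Hi. destruct (Nat.eqb_spec i n); [lia|auto].
  - rewrite IHn by lia. destruct (Nat.eqb_spec n m); [lia|]. lra. Qed.

Definition gv (n : nat) (g : nat -> nat -> R) (y : nat -> R) (i : nat) : R :=
  sumR n (fun j => g i j * y j).
Definition qf (n : nat) (g : nat -> nat -> R) (y : nat -> R) : R :=
  sumR n (fun i => y i * gv n g y i).

Lemma gv_S n g y i : gv (S n) g y i = gv n g y i + g i n * y n.
Proof. reflexivity. Qed.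

Lemma qf_S n g y : (forall i, (i < n)%nat -> g i n = g n i) ->
  qf (S n) g y = qf n g y + 2 * y n * gv n g y n + g n n * y n * y n.
Proof. intros Hs. unfold qf. simpl sumR at 1.
  rewrite (sumR_ext n (fun i => y i * gv (S n) g y i) (fun i => y i * gv n g y i + y n * (y i * g n i))).
  2:{ intros i Hi. rewrite gv_S, Hs by auto. ring. }
  rewrite sumR_plus, sumR_scal_l. rewrite gv_S. unfold gv at 3.
  rewrite (sumR_ext n (fun i => y i * g n i) (fun j => g n j * y j)) by (intros; ring). unfold gv. ring. Qed.

Lemma gv_ext n g y y' i : (forall j, (j < n)%nat -> y j = y' j) -> gv n g y i = gv n g y' i.
Proof. intros H; unfold gv; apply sumR_ext; intros; rewrite H; auto. Qed.
Lemma qf_ext n g y y' : (forall j, (j < n)%nat -> y j = y' j) -> qf n g y = qf n g y'.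
Proof. intros H; unfold qf; apply sumR_ext; intros; rewrite H by auto; rewrite (gv_ext n g y y'); auto. Qed.
Lemma gv_extg n g g' y i : (forall j, (j < n)%nat -> g i j = g' i j) -> gv n g y i = gv n g' y i.
Proof. intros H; unfold gv; apply sumR_ext; intros; rewrite H; auto. Qed.

Definition upd (y : nat -> R) (n : nat) (c : R) : nat -> R := fun j => if Nat.eqb j n then c else y j.

Lemma gram_bound N : forall g : nat -> nat -> R,
  (forall i j, (i < N)%nat -> (j < N)%nat -> g i j = g j i) ->
  (forall y, 0 <= qf N g y) ->
  exists C, 0 <= C /\ forall y, qf N g y <= C * sumR N (fun i => gv N g y i ^ 2).
Proof.
  induction N as [|n IH]; intros g Hs Hp.
  { exists 0. split; [lra|]. intros y. unfold qf. simpl. lra. }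
  assert (Hs' : forall i, (i < n)%nat -> g i n = g n i) by (intros; apply Hs; lia).
  assert (Hq : forall y, qf (S n) g y = qf n g y + 2 * y n * gv n g y n + g n n * y n * y n)
    by (intros; apply qf_S; auto).
  assert (Hupd : forall y c, (forall j, (j < n)%nat -> upd y n c j = y j) /\ upd y n c n = c).
  { intros y c; split; [intros j Hj; unfold upd; destruct (Nat.eqb_spec j n); [lia|auto]|unfold upd; rewrite Nat.eqb_refl; auto]. }
  assert (Hpn : 0 <= g n n).
  { specialize (Hp (fun j => if Nat.eqb j n then 1 else 0)). rewrite Hq in Hp.
    unfold qf, gv in Hp. rewrite Nat.eqb_refl in Hp.
    rewrite sumR_zero in Hp. rewrite (sumR_zero n (fun j => g n j * _)) in Hp. lra.
    intros j Hj; destruct (Nat.eqb_spec j n); [lia|ring].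
    intros i Hi; destruct (Nat.eqb_spec i n); [lia|ring]. }
  destruct (Rle_lt_or_eq_dec _ _ Hpn) as [Hpos|Hzero].
  - set (p := g n n) in *.
    set (g2 := fun i j => g i j - g i n * g n j / p).
    assert (Hg2s : forall i j, (i < n)%nat -> (j < n)%nat -> g2 i j = g2 j i).
    { intros i j Hi Hj; unfold g2. rewrite (Hs i j), Hs', (Hs' j) by lia. field. lra. }
    assert (Hgv2 : forall y i, gv n g2 y i = gv n g y i - g i n * gv n g y n / p).
    { intros y i. unfold gv, g2. rewrite (sumR_ext n _ (fun j => g i j * y j - (g i n / p) * (g n j * y j))) by (intros; field; lra).
      rewrite sumR_minus, sumR_scal_l. field. lra. }
    assert (Hq2 : forall y, qf n g2 y = qf n g y - gv n g y n ^ 2 / p).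
    { intros y. unfold qf. rewrite (sumR_ext n _ (fun i => y i * gv n g y i - (gv n g y n / p) * (g n i * y i))).
      2:{ intros i Hi. rewrite Hgv2, Hs' by auto. field. lra. }
      rewrite sumR_minus, sumR_scal_l. fold (gv n g y n). field. lra. }
    destruct (IH g2 Hg2s) as [C [HC HB]].
    { intros y. set (A := gv n g y n). set (y' := upd y n (- A / p)).
      destruct (Hupd y (- A / p)) as [Hl Hn]. fold y' in Hl, Hn.
      assert (E1 : qf n g2 y = qf n g2 y') by (apply qf_ext; intros; symmetry; apply Hl; auto).
      assert (E2 : gv n g y' n = A) by (apply gv_ext; intros; apply Hl; auto).
      specialize (Hp y'). rewrite Hq in Hp. rewrite E1, Hq2. rewrite E2, Hn in *.
      replace (qf n g y' - A ^ 2 / p) with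
        (qf n g y' + 2 * (- A / p) * A + p * (- A / p) * (- A / p)) by (field; lra).
      exact Hp. }
    set (Rr := sumR n (fun i => (g i n / p) ^ 2)).
    assert (HR : 0 <= Rr) by (apply sumR_ge0; intros; apply pow2_ge_0).
    exists (2 * C + 2 * C * Rr + / p). split.
    { assert (0 < / p) by (apply Rinv_0_lt_compat; lra). nra. }
    intros y. set (B := gv (S n) g y n).
    assert (HB' : B = gv n g y n + p * y n) by (unfold B; rewrite gv_S; reflexivity).
    assert (Hqq : qf (S n) g y = qf n g2 y + B ^ 2 / p).
    { rewrite Hq, Hq2, HB'. field. lra. }
    assert (Hgi : forall i, (i < n)%nat -> gv n g2 y i = gv (S n) g y i - (g i n / p) * B).
    { intros i Hi. rewrite Hgv2, gv_S, HB'. field. lra. }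
    assert (Hsum : sumR n (fun i => gv n g2 y i ^ 2) <= 2 * sumR n (fun i => gv (S n) g y i ^ 2) + 2 * Rr * B ^ 2).
    { assert (E : 2 * sumR n (fun i => gv (S n) g y i ^ 2) + 2 * Rr * B ^ 2 =
         sumR n (fun i => 2 * gv (S n) g y i ^ 2 + (2 * B ^ 2) * (g i n / p) ^ 2)).
      { rewrite sumR_plus, !sumR_scal_l. unfold Rr. ring. }
      rewrite E. apply sumR_le. intros i Hi. rewrite Hgi by auto.
      set (u := gv (S n) g y i). set (w := g i n / p).
      assert (0 <= (u + w * B) ^ 2) by apply pow2_ge_0. nra. }
    rewrite Hqq. specialize (HB y). rewrite sumR_S. fold B.
    assert (0 <= B ^ 2) by apply pow2_ge_0.
    assert (0 <= sumR n (fun i => gv (S n) g y i ^ 2)) by (apply sumR_ge0; intros; apply pow2_ge_0).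
    assert (0 < / p) by (apply Rinv_0_lt_compat; lra).
    replace (B ^ 2 / p) with (/ p * B ^ 2) by (field; lra).
    set (S' := sumR n (fun i => gv (S n) g y i ^ 2)) in *.
    set (T := sumR n (fun i => gv n g2 y i ^ 2)) in *.
    assert (C * T <= C * (2 * S' + 2 * Rr * B ^ 2)) by (apply Rmult_le_compat_l; lra).
    assert (0 <= C * Rr * S') by (apply Rmult_le_pos; [apply Rmult_le_pos|]; lra).
    assert (0 <= C * B ^ 2) by (apply Rmult_le_pos; lra).
    assert (0 <= / p * S') by (apply Rmult_le_pos; lra).
    nra.
  -
    assert (Hrow : forall y, gv n g y n = 0).
    { intros y. set (A := gv n g y n).
      destruct (Req_dec A 0) as [|HA]; auto. exfalso.
      set (c := - (qf n g y + 1) / (2 * A)).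
      specialize (Hp (upd y n c)). rewrite Hq in Hp.
      destruct (Hupd y c) as [Hl Hn]. rewrite Hn in Hp.
      rewrite (qf_ext n g (upd y n c) y) in Hp by auto.
      rewrite (gv_ext n g (upd y n c) y) in Hp by auto. fold A in Hp. rewrite <- Hzero in Hp.
      assert (E : 2 * c * A = - (qf n g y + 1)) by (unfold c; field; auto).
      rewrite E in Hp. rewrite !Rmult_0_l in Hp. lra. }
    assert (Hgin : forall i, (i < n)%nat -> g i n = 0).
    { intros i Hi. rewrite Hs'; auto. specialize (Hrow (fun j => if Nat.eqb j i then 1 else 0)).
      unfold gv in Hrow. rewrite (sumR_ext n _ (fun j => if Nat.eqb j i then g n j else 0)) in Hrow.
      rewrite sumR_delta in Hrow; auto. intros j Hj. destruct (Nat.eqb j i); ring. }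
    destruct (IH g) as [C [HC HB]].
    { intros i j Hi Hj; apply Hs; lia. }
    { intros y. specialize (Hp (upd y n 0)). rewrite Hq in Hp. destruct (Hupd y 0) as [Hl Hn].
      rewrite Hn in Hp. rewrite (qf_ext n g (upd y n 0) y) in Hp by auto. lra. }
    exists C. split; auto. intros y. rewrite Hq, Hrow, <- Hzero.
    specialize (HB y). rewrite sumR_S.
    rewrite (sumR_ext n (fun i => gv (S n) g y i ^ 2) (fun i => gv n g y i ^ 2)).
    2:{ intros i Hi. rewrite gv_S, Hgin by auto. f_equal; ring. }
    assert (0 <= gv (S n) g y n ^ 2) by apply pow2_ge_0. nra.
Qed.


Definition C2 (f : R -> R -> R) : Prop := forall x z, continuity_2d_pt f x z.

Lemma C2_const c : C2 (fun _ _ => c).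
Proof. intros x z; apply continuity_2d_pt_const. Qed.
Lemma C2_x : C2 (fun x _ => x).
Proof. intros x z; apply continuity_2d_pt_id1. Qed.
Lemma C2_z : C2 (fun _ z => z).
Proof. intros x z; apply continuity_2d_pt_id2. Qed.
Lemma C2_plus f g : C2 f -> C2 g -> C2 (fun x z => f x z + g x z).
Proof. intros Hf Hg x z; apply continuity_2d_pt_plus; auto. Qed.
Lemma C2_minus f g : C2 f -> C2 g -> C2 (fun x z => f x z - g x z).
Proof. intros Hf Hg x z; apply continuity_2d_pt_minus; auto. Qed.
Lemma C2_mult f g : C2 f -> C2 g -> C2 (fun x z => f x z * g x z).
Proof. intros Hf Hg x z; apply continuity_2d_pt_mult; auto. Qed.
Lemma C2_ext f g : (forall x z, f x z = g x z) -> C2 f -> C2 g.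
Proof. intros E Hf x z. apply (continuity_2d_pt_ext f); auto. Qed.
Lemma C2_pow f n : C2 f -> C2 (fun x z => f x z ^ n).
Proof. intros Hf. induction n; simpl. apply C2_const. apply C2_mult; auto. Qed.
Lemma C2_sumR n (F : nat -> R -> R -> R) : (forall i, (i < n)%nat -> C2 (F i)) ->
  C2 (fun x z => sumR n (fun i => F i x z)).
Proof. induction n; intros H; simpl. apply C2_const.
  apply C2_plus. apply IHn; intros; apply H; lia. apply H; lia. Qed.

Lemma C2_fixx f x1 : C2 f -> C2 (fun _ z => f x1 z).
Proof. intros Hf x z eps. destruct (Hf x1 z eps) as [d Hd]. exists d. intros u v _ Hv.
  apply Hd; auto. rewrite Rminus_diag, Rabs_R0. apply cond_pos. Qed.
Lemma C2_fixz f z1 : C2 f -> C2 (fun x _ => f x z1).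
Proof. intros Hf x z eps. destruct (Hf x z1 eps) as [d Hd]. exists d. intros u v Hu _.
  apply Hd; auto. rewrite Rminus_diag, Rabs_R0. apply cond_pos. Qed.

Lemma cont_of_eps (h : R -> R) x :
  (forall eps, 0 < eps -> exists d, 0 < d /\ forall y, Rabs (y - x) < d -> Rabs (h y - h x) < eps) ->
  continuous h x.
Proof. intros H. apply continuity_pt_filterlim.
  intros eps Heps. destruct (H eps Heps) as [d [Hd Hy]]. exists d; split; auto.
  intros y [_ Hyd]. unfold R_dist in *. simpl in *. unfold R_dist in Hyd. apply Hy; auto. Qed.

Lemma C2_cont_z f x z : C2 f -> continuous (fun z => f x z) z.
Proof. intros Hf. apply cont_of_eps. intros eps Heps.
  destruct (Hf x z (mkposreal eps Heps)) as [d Hd]. exists d. split. apply cond_pos.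
  intros y Hy. apply Hd; auto. rewrite Rminus_diag, Rabs_R0. apply cond_pos. Qed.
Lemma C2_cont_x f x z : C2 f -> continuous (fun x => f x z) x.
Proof. intros Hf. apply cont_of_eps. intros eps Heps.
  destruct (Hf x z (mkposreal eps Heps)) as [d Hd]. exists d. split. apply cond_pos.
  intros y Hy. apply Hd; auto. rewrite Rminus_diag, Rabs_R0. apply cond_pos. Qed.

Lemma ex_RInt_z f x a b : C2 f -> ex_RInt (fun z => f x z) a b.
Proof. intros Hf. apply (@ex_RInt_continuous R_CompleteNormedModule). intros; apply C2_cont_z; auto. Qed.
Lemma ex_RInt_x f z a b : C2 f -> ex_RInt (fun x => f x z) a b.
Proof. intros Hf. apply (@ex_RInt_continuous R_CompleteNormedModule). intros; apply C2_cont_x; auto. Qed.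

Lemma RInt_plusR (f g : R -> R) a b : ex_RInt f a b -> ex_RInt g a b ->
  RInt (fun x => f x + g x) a b = RInt f a b + RInt g a b.
Proof. intros; apply (RInt_plus f g); auto. Qed.
Lemma RInt_minusR (f g : R -> R) a b : ex_RInt f a b -> ex_RInt g a b ->
  RInt (fun x => f x - g x) a b = RInt f a b - RInt g a b.
Proof. intros; apply (RInt_minus f g); auto. Qed.
Lemma RInt_scalR (f : R -> R) a b c : ex_RInt f a b ->
  RInt (fun x => c * f x) a b = c * RInt f a b.
Proof. intros; apply (RInt_scal f); auto. Qed.
Lemma RInt_sumR n (F : nat -> R -> R) a b : (forall i, (i < n)%nat -> ex_RInt (F i) a b) ->
  RInt (fun x => sumR n (fun i => F i x)) a b = sumR n (fun i => RInt (F i) a b).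
Proof. induction n; intros H; simpl.
  - rewrite RInt_const. unfold scal; simpl; unfold mult; simpl. ring.
  - rewrite RInt_plusR. rewrite IHn. auto. intros; apply H; lia.
    2: apply H; lia.
    clear IHn. induction n; simpl. apply ex_RInt_const.
    apply (ex_RInt_plus (fun x => sumR n (fun i => F i x)) (F n)). apply IHn. intros; apply H; lia.
    apply H; lia. Qed.
Lemma ex_RInt_sumR n (F : nat -> R -> R) a b : (forall i, (i < n)%nat -> ex_RInt (F i) a b) ->
  ex_RInt (fun x => sumR n (fun i => F i x)) a b.
Proof. induction n; intros H; simpl. apply ex_RInt_const.
    apply (ex_RInt_plus (fun x => sumR n (fun i => F i x)) (F n)). apply IHn. intros; apply H; lia.
    apply H; lia. Qed.

Lemma cont_param f z0 z1 x : C2 f -> z0 <= z1 ->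
  continuous (fun x => RInt (fun z => f x z) z0 z1) x.
Proof. intros Hf Hz. apply cont_of_eps. intros eps Heps.
  set (e := eps / (z1 - z0 + 1)).
  assert (He : 0 < e) by (unfold e; apply Rdiv_lt_0_compat; lra).
  destruct (uniform_continuity_2d_1d' f z0 z1 x (fun z _ => Hf x z) (mkposreal e He)) as [d Hd].
  exists d. split. apply cond_pos. intros y Hy.
  assert (Hm : ex_RInt (fun z => f y z - f x z) z0 z1).
  { apply (ex_RInt_minus (fun z => f y z) (fun z => f x z)); apply ex_RInt_z; auto. }
  rewrite <- RInt_minusR by (apply ex_RInt_z; auto).
  eapply Rle_lt_trans. apply abs_RInt_le_const with (M := e); auto.
  { intros z Hz'. left. pose proof (Rabs_def2 _ _ Hy). pose proof (cond_pos d).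
    apply Hd; simpl; try (split; lra).
    rewrite Rminus_diag, Rabs_R0. apply cond_pos. }
  unfold e. apply Rlt_le_trans with ((z1 - z0 + 1) * (eps / (z1 - z0 + 1))).
  apply Rmult_lt_compat_r. apply Rdiv_lt_0_compat; lra. lra.
  right; field; lra.
Qed.

Lemma ex_RInt_param f z0 z1 x0 x1 : C2 f -> z0 <= z1 ->
  ex_RInt (fun x => RInt (fun z => f x z) z0 z1) x0 x1.
Proof. intros; apply (@ex_RInt_continuous R_CompleteNormedModule); intros; apply cont_param; auto. Qed.

Section Cint.
Variables (x0 x1 z0 z1 : R).
Hypothesis (Hx : x0 <= x1) (Hz : z0 <= z1).

Lemma cint_plus f g : C2 f -> C2 g ->
  cint x0 x1 z0 z1 (fun x z => f x z + g x z) = cint x0 x1 z0 z1 f + cint x0 x1 z0 z1 g.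
Proof. intros Hf Hg. unfold cint.
  rewrite (RInt_ext _ (fun x => RInt (fun z => f x z) z0 z1 + RInt (fun z => g x z) z0 z1)).
  apply RInt_plusR; apply ex_RInt_param; auto.
  intros; apply RInt_plusR; apply ex_RInt_z; auto. Qed.

Lemma cint_minus f g : C2 f -> C2 g ->
  cint x0 x1 z0 z1 (fun x z => f x z - g x z) = cint x0 x1 z0 z1 f - cint x0 x1 z0 z1 g.
Proof. intros Hf Hg. unfold cint.
  rewrite (RInt_ext _ (fun x => RInt (fun z => f x z) z0 z1 - RInt (fun z => g x z) z0 z1)).
  apply RInt_minusR; apply ex_RInt_param; auto.
  intros; apply RInt_minusR; apply ex_RInt_z; auto. Qed.

Lemma cint_scal c f : C2 f ->
  cint x0 x1 z0 z1 (fun x z => c * f x z) = c * cint x0 x1 z0 z1 f.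
Proof. intros Hf. unfold cint.
  rewrite (RInt_ext _ (fun x => c * RInt (fun z => f x z) z0 z1)).
  apply RInt_scalR; apply ex_RInt_param; auto.
  intros; apply RInt_scalR; apply ex_RInt_z; auto. Qed.

Lemma cint_sumR n F : (forall i, (i < n)%nat -> C2 (F i)) ->
  cint x0 x1 z0 z1 (fun x z => sumR n (fun i => F i x z)) = sumR n (fun i => cint x0 x1 z0 z1 (F i)).
Proof. induction n; intros H; simpl.
  - unfold cint. rewrite (RInt_ext _ (fun _ => 0)). rewrite RInt_const. unfold scal; simpl; unfold mult; simpl; ring.
    intros. rewrite RInt_const. unfold scal; simpl; unfold mult; simpl; ring.
  - rewrite cint_plus. rewrite IHn. auto. intros; apply H; lia.
    apply C2_sumR; intros; apply H; lia. apply H; lia. Qed.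

Lemma cint_ext f g : (forall x z, x0 <= x <= x1 -> z0 <= z <= z1 -> f x z = g x z) ->
  cint x0 x1 z0 z1 f = cint x0 x1 z0 z1 g.
Proof. intros H. unfold cint. apply RInt_ext. intros x Hx'. apply RInt_ext. intros z Hz'.
  rewrite Rmin_left, Rmax_right in *; auto. apply H; lra. Qed.

Lemma RInt_ge0 (f : R -> R) a b : a <= b -> ex_RInt f a b -> (forall x, a < x < b -> 0 <= f x) -> 0 <= RInt f a b.
Proof. intros Hab Hf H. apply Rle_trans with (RInt (fun _ => 0) a b).
  rewrite RInt_const. unfold scal; simpl; unfold mult; simpl; lra.
  apply RInt_le; auto. apply ex_RInt_const. Qed.

Lemma cint_ge0 f : C2 f -> (forall x z, 0 <= f x z) -> 0 <= cint x0 x1 z0 z1 f.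
Proof. intros Hf H. unfold cint. apply RInt_ge0; auto. apply ex_RInt_param; auto.
  intros x _. apply RInt_ge0; auto. apply ex_RInt_z; auto. Qed.

End Cint.


Lemma divmod_pair a b K : (b < K)%nat -> ((a * K + b) / K = a /\ (a * K + b) mod K = b)%nat.
Proof. intros H. assert (K <> 0%nat) by lia.
  assert (E1 : ((a * K + b) / K = a)%nat) by (rewrite Nat.div_add_l, Nat.div_small by lia; lia).
  split; auto. pose proof (Nat.div_mod_eq (a * K + b) K). rewrite E1 in H1. lia. Qed.

Lemma is_derive_sumR n (f : nat -> R -> R) (df : nat -> R) x :
  (forall i, (i < n)%nat -> is_derive (f i) x (df i)) ->
  is_derive (fun y => sumR n (fun i => f i y)) x (sumR n df).
Proof. induction n; intros H; simpl.
  - apply (is_derive_const (K:=R_AbsRing) (V:=R_NormedModule)).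
  - apply (is_derive_plus (K:=R_AbsRing) (V:=R_NormedModule)). apply IHn; intros; apply H; lia. apply H; lia. Qed.

Lemma is_derive_multR (f g : R -> R) x df dg : is_derive f x df -> is_derive g x dg ->
  is_derive (fun y => f y * g y) x (df * g x + f x * dg).
Proof. intros; apply (is_derive_mult f g); auto. intros; apply Rmult_comm. Qed.

Lemma is_derive_l (f : R -> R) x l l' : is_derive f x l -> l = l' -> is_derive f x l'.
Proof. intros H ->; auto. Qed.

Lemma is_derive_powR n x : is_derive (fun y => y ^ n) x (INR n * x ^ Init.Nat.pred n).
Proof. pose proof (is_derive_pow (fun y => y) n x 1 (is_derive_id (K:=R_AbsRing) x)).
  eapply is_derive_l. exact H. simpl; ring. Qed.

Definition mono (a b : nat) (x z : R) : R := x ^ a * z ^ b.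
Definition dmx (a b : nat) (x z : R) : R := INR a * x ^ Init.Nat.pred a * z ^ b.
Definition dmz (a b : nat) (x z : R) : R := x ^ a * (INR b * z ^ Init.Nat.pred b).

Lemma C2_mono a b : C2 (mono a b).
Proof. unfold mono. apply C2_mult; apply C2_pow; [apply C2_x|apply C2_z]. Qed.
Lemma C2_dmx a b : C2 (dmx a b).
Proof. unfold dmx. apply C2_mult; [apply C2_mult|]; [apply C2_const|apply C2_pow; apply C2_x|apply C2_pow; apply C2_z]. Qed.
Lemma C2_dmz a b : C2 (dmz a b).
Proof. unfold dmz. apply C2_mult; [|apply C2_mult]; [apply C2_pow; apply C2_x|apply C2_const|apply C2_pow; apply C2_z]. Qed.

Lemma is_derive_mono_x a b x z : is_derive (fun y => mono a b y z) x (dmx a b x z).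
Proof. unfold mono, dmx. eapply is_derive_l.
  apply (is_derive_multR (fun y => y ^ a) (fun _ => z ^ b)). apply is_derive_powR.
  apply (is_derive_const (K:=R_AbsRing) (V:=R_NormedModule)). simpl. unfold zero; simpl. ring. Qed.
Lemma is_derive_mono_z a b x z : is_derive (fun y => mono a b x y) z (dmz a b x z).
Proof. unfold mono, dmz. eapply is_derive_l.
  apply (is_derive_multR (fun _ => x ^ a) (fun y => y ^ b)).
  apply (is_derive_const (K:=R_AbsRing) (V:=R_NormedModule)). apply is_derive_powR. simpl. unfold zero; simpl. ring. Qed.

Definition psum (k : nat) (c : nat -> nat -> R) (m : nat -> nat -> R -> R -> R) (x z : R) : R :=
  sumR (S k) (fun a => sumR (S k - a) (fun b => c a b * m a b x z)).

Lemma poly2_psum k c x z : poly2 k c x z = psum k c mono x z.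
Proof. unfold poly2, psum, mono. apply sumR_ext; intros; apply sumR_ext; intros; ring. Qed.

Lemma C2_psum k c m : (forall a b, C2 (m a b)) -> C2 (psum k c m).
Proof. intros H. unfold psum. apply C2_sumR; intros; apply C2_sumR; intros.
  apply C2_mult; [apply C2_const|auto]. Qed.

Lemma C2_poly2 k c : C2 (poly2 k c).
Proof. apply (C2_ext (psum k c mono)). intros; symmetry; apply poly2_psum. apply C2_psum; apply C2_mono. Qed.

Lemma is_derive_poly2_x k c x z : is_derive (fun y => poly2 k c y z) x (psum k c dmx x z).
Proof. eapply is_derive_ext. intros; symmetry; apply poly2_psum. unfold psum.
  apply is_derive_sumR; intros; apply is_derive_sumR; intros.
  apply (is_derive_scal (fun y => mono i i0 y z)). apply is_derive_mono_x. Qed.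
Lemma is_derive_poly2_z k c x z : is_derive (fun y => poly2 k c x y) z (psum k c dmz x z).
Proof. eapply is_derive_ext. intros; symmetry; apply poly2_psum. unfold psum.
  apply is_derive_sumR; intros; apply is_derive_sumR; intros.
  apply (is_derive_scal (fun y => mono i i0 x y)). apply is_derive_mono_z. Qed.

Lemma poly_C2 k f : is_poly2 k f -> C2 f.
Proof. intros [c Hc]. apply (C2_ext (poly2 k c)). intros; symmetry; auto. apply C2_poly2. Qed.

Lemma poly_fun k f : is_poly2 k f -> exists c, f = poly2 k c.
Proof. intros [c Hc]. exists c. apply functional_extensionality; intros x.
  apply functional_extensionality; intros z. auto. Qed.

Lemma poly_dx k f x z : is_poly2 k f -> is_derive (fun y => f y z) x (pdx f x z).
Proof. intros Hp. destruct (poly_fun k f Hp) as [c ->]. unfold pdx.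
  apply Derive_correct. eexists. apply is_derive_poly2_x. Qed.
Lemma poly_dz k f x z : is_poly2 k f -> is_derive (fun y => f x y) z (pdz f x z).
Proof. intros Hp. destruct (poly_fun k f Hp) as [c ->]. unfold pdz.
  apply Derive_correct. eexists. apply is_derive_poly2_z. Qed.

Lemma poly_pdx_C2 k f : is_poly2 k f -> C2 (pdx f).
Proof. intros Hp. destruct (poly_fun k f Hp) as [c ->].
  apply (C2_ext (psum k c dmx)). intros x z. symmetry. unfold pdx. apply is_derive_unique.
  apply is_derive_poly2_x. apply C2_psum; apply C2_dmx. Qed.
Lemma poly_pdz_C2 k f : is_poly2 k f -> C2 (pdz f).
Proof. intros Hp. destruct (poly_fun k f Hp) as [c ->].
  apply (C2_ext (psum k c dmz)). intros x z. symmetry. unfold pdz. apply is_derive_unique.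
  apply is_derive_poly2_z. apply C2_psum; apply C2_dmz. Qed.


Definition Rep (t : R) (F : R -> R -> R -> R) (F' : R -> R -> R) : Prop :=
  exists n (u : nat -> R -> R) (P : nat -> R -> R -> R),
    (forall i, (i < n)%nat -> ex_derive (u i) t) /\ (forall i, (i < n)%nat -> C2 (P i)) /\
    (exists d : posreal, forall s, Rabs (s - t) < d -> forall x z, F s x z = sumR n (fun i => u i s * P i x z)) /\
    (forall x z, F' x z = sumR n (fun i => Derive (u i) t * P i x z)).

Lemma locally_ball t (d : posreal) (P : R -> Prop) : (forall s, Rabs (s - t) < d -> P s) -> locally t P.
Proof. intros H. exists d. intros s Hs. apply H. exact Hs. Qed.

Lemma Rep_pt t F F' x z : Rep t F F' -> is_derive (fun s => F s x z) t (F' x z).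
Proof. intros [n [u [P [Hu [HP [[d Hd] HF']]]]]].
  apply (is_derive_ext_loc (fun s => sumR n (fun i => u i s * P i x z))).
  apply (locally_ball t d). intros s Hs. rewrite Hd; auto.
  rewrite HF'. apply is_derive_sumR. intros i Hi.
  eapply is_derive_l. apply (is_derive_multR (u i) (fun _ => P i x z)). apply Derive_correct; auto.
  apply (is_derive_const (K:=R_AbsRing) (V:=R_NormedModule)). simpl; unfold zero; simpl; ring. Qed.

Lemma Rep_C2 t F F' : Rep t F F' -> C2 (F t) /\ C2 F'.
Proof. intros [n [u [P [Hu [HP [[d Hd] HF']]]]]]. split.
  - apply (C2_ext (fun x z => sumR n (fun i => u i t * P i x z))). intros; rewrite Hd; auto.
    rewrite Rminus_diag, Rabs_R0; apply cond_pos.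
    apply C2_sumR; intros; apply C2_mult; [apply C2_const|auto].
  - apply (C2_ext (fun x z => sumR n (fun i => Derive (u i) t * P i x z))). intros; rewrite HF'; auto.
    apply C2_sumR; intros; apply C2_mult; [apply C2_const|auto]. Qed.

Lemma Rep_ext t F F' G G' : Rep t F F' ->
  (exists d : posreal, forall s, Rabs (s - t) < d -> forall x z, F s x z = G s x z) ->
  (forall x z, F' x z = G' x z) -> Rep t G G'.
Proof. intros [n [u [P [Hu [HP [[d Hd] HF']]]]]] [d2 Hd2] HG'.
  exists n, u, P. repeat split; auto.
  - exists (mkposreal _ (Rmin_stable_in_posreal d d2)). intros s Hs x z. simpl in Hs.
    rewrite <- Hd2, Hd; auto. eapply Rlt_le_trans; [apply Hs|apply Rmin_l].
    eapply Rlt_le_trans; [apply Hs|apply Rmin_r].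
  - intros; rewrite <- HG'; auto. Qed.

Lemma Rep_coef t u P : ex_derive u t -> C2 P ->
  Rep t (fun s x z => u s * P x z) (fun x z => Derive u t * P x z).
Proof. intros Hu HP. exists 1%nat, (fun _ => u), (fun _ => P). repeat split; auto.
  - exists (mkposreal 1 Rlt_0_1). intros. simpl. ring.
  - intros. simpl. ring. Qed.

Lemma Rep_const t P : C2 P -> Rep t (fun _ => P) (fun _ _ => 0).
Proof. intros HP. apply (Rep_ext t (fun s x z => (fun _ => 1) s * P x z) (fun x z => Derive (fun _ => 1) t * P x z)).
  apply Rep_coef; auto. apply ex_derive_const.
  exists (mkposreal 1 Rlt_0_1). intros; ring.
  intros. rewrite Derive_const. ring. Qed.

Lemma Rep_plus t F F' G G' : Rep t F F' -> Rep t G G' ->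
  Rep t (fun s x z => F s x z + G s x z) (fun x z => F' x z + G' x z).
Proof. intros [n [u [P [Hu [HP [[d Hd] HF']]]]]] [m [w [Q [Hw [HQ [[d2 Hd2] HG']]]]]].
  exists (n + m)%nat, (fun r => if Nat.ltb r n then u r else w (r - n)%nat),
    (fun r => if Nat.ltb r n then P r else Q (r - n)%nat).
  assert (Hlt : forall r, (r < n)%nat -> Nat.ltb r n = true) by (intros; apply Nat.ltb_lt; auto).
  assert (Hge : forall j, Nat.ltb (n + j) n = false) by (intros; apply Nat.ltb_ge; lia).
  assert (Hsub : forall j, (n + j - n = j)%nat) by (intros; lia).
  repeat split.
  - intros r Hr. destruct (Nat.ltb_spec r n). apply Hu; auto. apply Hw; lia.
  - intros r Hr. destruct (Nat.ltb_spec r n). apply HP; auto. apply HQ; lia.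
  - exists (mkposreal _ (Rmin_stable_in_posreal d d2)). intros s Hs x z. simpl in Hs.
    rewrite sumR_add. rewrite Hd, Hd2.
    f_equal. apply sumR_ext; intros; rewrite Hlt; auto.
    apply sumR_ext; intros; rewrite Hge, Hsub; auto.
    eapply Rlt_le_trans; [apply Hs|apply Rmin_r].
    eapply Rlt_le_trans; [apply Hs|apply Rmin_l].
  - intros x z. rewrite sumR_add, HF', HG'. f_equal.
    apply sumR_ext; intros; rewrite Hlt; auto.
    apply sumR_ext; intros; rewrite Hge, Hsub; auto. Qed.

Lemma Rep_scal t c F F' : Rep t F F' -> Rep t (fun s x z => c * F s x z) (fun x z => c * F' x z).
Proof. intros [n [u [P [Hu [HP [[d Hd] HF']]]]]].
  exists n, (fun i s => c * u i s), P. repeat split; auto.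
  - intros i Hi. apply ex_derive_scal. auto.
  - exists d. intros s Hs x z. rewrite Hd; auto. rewrite <- sumR_scal_l. apply sumR_ext; intros; ring.
  - intros x z. rewrite HF', <- sumR_scal_l. apply sumR_ext; intros i Hi.
    rewrite Derive_scal. ring. Qed.

Lemma Rep_minus t F F' G G' : Rep t F F' -> Rep t G G' ->
  Rep t (fun s x z => F s x z - G s x z) (fun x z => F' x z - G' x z).
Proof. intros HF HG. eapply Rep_ext. apply (Rep_plus t _ _ _ _ HF (Rep_scal t (-1) _ _ HG)).
  exists (mkposreal 1 Rlt_0_1). intros; cbv beta; ring. intros; cbv beta; ring. Qed.

Lemma sumR_prod n m f g : sumR n f * sumR m g = sumR n (fun i => sumR m (fun j => f i * g j)).
Proof. rewrite <- sumR_scal_r. apply sumR_ext; intros. rewrite <- sumR_scal_l. reflexivity. Qed.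

Lemma Rep_mult t F F' G G' : Rep t F F' -> Rep t G G' ->
  Rep t (fun s x z => F s x z * G s x z) (fun x z => F' x z * G t x z + F t x z * G' x z).
Proof. intros [n [u [P [Hu [HP [[d Hd] HF']]]]]] [m [w [Q [Hw [HQ [[d2 Hd2] HG']]]]]].
  exists (n * m)%nat, (fun r s => u (r / m)%nat s * w (r mod m)%nat s),
    (fun r x z => P (r / m)%nat x z * Q (r mod m)%nat x z).
  assert (Hdm : forall r, (r < n * m)%nat -> (r / m < n)%nat /\ (r mod m < m)%nat).
  { intros r Hr. assert (m <> 0%nat) by (intro; subst; lia). split.
    apply Nat.Div0.div_lt_upper_bound; lia. apply Nat.mod_upper_bound; auto. }
  assert (Hflat : forall (h : nat -> nat -> R), sumR (n * m) (fun r => h (r / m)%nat (r mod m)%nat) =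
     sumR n (fun i => sumR m (fun j => h i j))).
  { intros h. rewrite sumR_mul. apply sumR_ext; intros i Hi; apply sumR_ext; intros j Hj.
    destruct (divmod_pair i j m Hj) as [-> ->]. reflexivity. }
  assert (Ht : Rabs (t - t) < d) by (rewrite Rminus_diag, Rabs_R0; apply cond_pos).
  assert (Ht2 : Rabs (t - t) < d2) by (rewrite Rminus_diag, Rabs_R0; apply cond_pos).
  repeat split.
  - intros r Hr. destruct (Hdm r Hr). apply ex_derive_mult; [apply Hu|apply Hw]; auto.
  - intros r Hr. destruct (Hdm r Hr). apply C2_mult; [apply HP|apply HQ]; auto.
  - exists (mkposreal _ (Rmin_stable_in_posreal d d2)). intros s Hs x z. simpl in Hs.
    rewrite Hd, Hd2. symmetry. etransitivity. apply (Hflat (fun i j => u i s * w j s * (P i x z * Q j x z))).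
    rewrite sumR_prod. apply sumR_ext; intros; apply sumR_ext; intros; ring.
    eapply Rlt_le_trans; [apply Hs|apply Rmin_r].
    eapply Rlt_le_trans; [apply Hs|apply Rmin_l].
  - intros x z. rewrite HF', HG', (Hd t Ht), (Hd2 t Ht2).
    rewrite (sumR_ext (n * m) _ (fun r => (fun i j => (Derive (u i) t * w j t + u i t * Derive (w j) t) * (P i x z * Q j x z)) (r / m)%nat (r mod m)%nat)).
    2:{ intros r Hr. destruct (Hdm r Hr). simpl. f_equal.
        apply is_derive_unique. apply (is_derive_multR (u (r / m)%nat) (w (r mod m)%nat)); apply Derive_correct; [apply Hu|apply Hw]; auto. }
    symmetry. etransitivity. apply (Hflat (fun i j => (Derive (u i) t * w j t + u i t * Derive (w j) t) * (P i x z * Q j x z))). symmetry.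
    rewrite !sumR_prod. rewrite <- sumR_plus. apply sumR_ext; intros.
    rewrite <- sumR_plus. apply sumR_ext; intros. ring. Qed.

Lemma Rep_sumR t n (F : nat -> R -> R -> R -> R) (F' : nat -> R -> R -> R) :
  (forall i, (i < n)%nat -> Rep t (F i) (F' i)) ->
  Rep t (fun s x z => sumR n (fun i => F i s x z)) (fun x z => sumR n (fun i => F' i x z)).
Proof. induction n; intros H; simpl.
  - apply Rep_const. apply C2_const.
  - apply Rep_plus. apply IHn; intros; apply H; lia. apply H; lia. Qed.

Lemma Rep_fixx t F F' x1 : Rep t F F' -> Rep t (fun s _ z => F s x1 z) (fun _ z => F' x1 z).
Proof. intros [n [u [P [Hu [HP [[d Hd] HF']]]]]].
  exists n, u, (fun i _ z => P i x1 z). repeat split; auto.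
  intros; apply C2_fixx; auto. exists d; intros; apply Hd; auto. Qed.
Lemma Rep_fixz t F F' z1 : Rep t F F' -> Rep t (fun s x _ => F s x z1) (fun x _ => F' x z1).
Proof. intros [n [u [P [Hu [HP [[d Hd] HF']]]]]].
  exists n, u, (fun i x _ => P i x z1). repeat split; auto.
  intros; apply C2_fixz; auto. exists d; intros; apply Hd; auto. Qed.

Lemma Rep_RInt_z t F F' y z0 z1 : Rep t F F' ->
  is_derive (fun s => RInt (fun z => F s y z) z0 z1) t (RInt (fun z => F' y z) z0 z1).
Proof. intros [n [u [P [Hu [HP [[d Hd] HF']]]]]].
  apply (is_derive_ext_loc (fun s => sumR n (fun i => u i s * RInt (fun z => P i y z) z0 z1))).
  { apply (locally_ball t d). intros s Hs.
    rewrite (RInt_ext (fun z => F s y z) (fun z => sumR n (fun i => u i s * P i y z))) by (intros; apply Hd; auto).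
    rewrite RInt_sumR. apply sumR_ext; intros. rewrite RInt_scalR; auto. apply ex_RInt_z; auto.
    intros. apply (ex_RInt_scal (fun z => P i y z)). apply ex_RInt_z; auto. }
  rewrite (RInt_ext _ (fun z => sumR n (fun i => Derive (u i) t * P i y z))) by (intros; apply HF').
  rewrite RInt_sumR. 2:{ intros. apply (ex_RInt_scal (fun z => P i y z)). apply ex_RInt_z; auto. }
  apply is_derive_sumR. intros i Hi. rewrite RInt_scalR by (apply ex_RInt_z; auto).
  eapply is_derive_l. apply (is_derive_multR (u i) (fun _ => RInt (fun z => P i y z) z0 z1)).
  apply Derive_correct; auto. apply (is_derive_const (K:=R_AbsRing) (V:=R_NormedModule)).
  simpl; unfold zero; simpl. rewrite Rmult_0_r, Rplus_0_r. reflexivity. Qed.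

Lemma Rep_RInt_x t F F' y x0 x1 : Rep t F F' ->
  is_derive (fun s => RInt (fun x => F s x y) x0 x1) t (RInt (fun x => F' x y) x0 x1).
Proof. intros HR. assert (HR' : Rep t (fun s a b => F s b a) (fun a b => F' b a)).
  { destruct HR as [n [u [P [Hu [HP [[d Hd] HF']]]]]].
    exists n, u, (fun i a b => P i b a). repeat split; auto.
    intros i Hi a b eps. destruct (HP i Hi b a eps) as [e He]. exists e. intros; apply He; auto.
    exists d; intros; apply Hd; auto. }
  apply (Rep_RInt_z t _ _ y x0 x1 HR'). Qed.

Lemma Rep_cint t F F' x0 x1 z0 z1 : z0 <= z1 -> x0 <= x1 -> Rep t F F' ->
  is_derive (fun s => cint x0 x1 z0 z1 (F s)) t (cint x0 x1 z0 z1 F').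
Proof. intros Hz Hx [n [u [P [Hu [HP [[d Hd] HF']]]]]].
  apply (is_derive_ext_loc (fun s => sumR n (fun i => u i s * cint x0 x1 z0 z1 (P i)))).
  { apply (locally_ball t d). intros s Hs.
    rewrite (cint_ext x0 x1 z0 z1 Hx Hz (F s) (fun x z => sumR n (fun i => u i s * P i x z))) by (intros; apply Hd; auto).
    rewrite cint_sumR; auto. apply sumR_ext; intros. rewrite cint_scal; auto.
    intros. apply C2_mult; [apply C2_const|auto]. }
  rewrite (cint_ext x0 x1 z0 z1 Hx Hz F' (fun x z => sumR n (fun i => Derive (u i) t * P i x z))) by (intros; apply HF').
  rewrite cint_sumR; auto. 2:{ intros. apply C2_mult; [apply C2_const|auto]. }
  apply is_derive_sumR. intros i Hi. rewrite cint_scal by auto.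
  eapply is_derive_l. apply (is_derive_multR (u i) (fun _ => cint x0 x1 z0 z1 (P i))).
  apply Derive_correct; auto. apply (is_derive_const (K:=R_AbsRing) (V:=R_NormedModule)).
  simpl; unfold zero; simpl; ring. Qed.


Lemma div_x F G x0 x1 z0 z1 : z0 <= z1 ->
  (forall x z, is_derive (fun y => F y z) x (G x z)) -> C2 G -> C2 F ->
  cint x0 x1 z0 z1 G = RInt (fun z => F x1 z - F x0 z) z0 z1.
Proof. intros Hz HD HG HF.
  set (H := fun x => RInt (fun z => F x z) z0 z1).
  assert (HH : forall x, is_derive H x (RInt (fun z => G x z) z0 z1)).
  { intros x. unfold H.
    assert (E : RInt (fun z => G x z) z0 z1 = RInt (fun t => Derive (fun u => F u t) x) z0 z1).
    { apply RInt_ext. intros; symmetry; apply is_derive_unique; auto. }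
    rewrite E. apply (is_derive_RInt_param F z0 z1 x).
    - exists (mkposreal 1 Rlt_0_1). intros; eexists; apply HD.
    - intros t _. apply (continuity_2d_pt_ext G). intros; symmetry; apply is_derive_unique; auto. apply HG.
    - exists (mkposreal 1 Rlt_0_1). intros; apply ex_RInt_z; auto. }
  unfold cint. rewrite RInt_minusR by (apply ex_RInt_z; auto).
  apply is_RInt_unique. apply (is_RInt_derive H). intros; apply HH.
  intros; apply cont_param; auto. Qed.

Lemma div_z F G x0 x1 z0 z1 :
  (forall x z, is_derive (fun y => F x y) z (G x z)) -> C2 G ->
  cint x0 x1 z0 z1 G = RInt (fun x => F x z1 - F x z0) x0 x1.
Proof. intros HD HG. unfold cint. apply RInt_ext. intros x _.
  apply is_RInt_unique. apply (is_RInt_derive (fun y => F x y)). intros; apply HD.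
  intros; apply C2_cont_z; auto. Qed.

Lemma telescope n (f : nat -> R) : (0 < n)%nat ->
  sumR n (fun i => f i - (if Nat.ltb 0 i then f (pred i) else 0)) = f (pred n).
Proof. induction n; intros Hn; [lia|]. destruct n.
  - simpl. ring.
  - rewrite sumR_S, IHn by lia. simpl. ring. Qed.

Lemma squeeze0 (f h : R -> R) t (d : posreal) : is_derive h t 0 -> h t = 0 -> f t = 0 ->
  (forall s, Rabs (s - t) < d -> Rabs (f s) <= h s) -> is_derive f t 0.
Proof. intros Hh Hh0 Hf0 Hle. apply is_derive_Reals. apply is_derive_Reals in Hh.
  intros eps Heps. destruct (Hh eps Heps) as [d2 Hd2].
  exists (mkposreal _ (Rmin_stable_in_posreal d d2)). intros hh Hne Hlt. simpl in Hlt.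
  specialize (Hd2 hh Hne (Rlt_le_trans _ _ _ Hlt (Rmin_r _ _))).
  rewrite Hh0, Rminus_0_r, Rminus_0_r in Hd2. rewrite Hf0, !Rminus_0_r.
  assert (Hb : Rabs (f (t + hh)) <= h (t + hh)).
  { apply Hle. replace (t + hh - t) with hh by ring. eapply Rlt_le_trans. apply Hlt. apply Rmin_l. }
  unfold Rdiv in *. rewrite Rabs_mult in *. eapply Rle_lt_trans; [|apply Hd2].
  apply Rmult_le_compat_r. apply Rabs_pos.
  eapply Rle_trans. apply Hb. apply RRle_abs. Qed.

Definition ASf (M : nat) (A : nat -> nat -> R -> R -> R) (Sm : nat -> nat -> R -> R -> R) (d : nat)
  (q : nat -> R -> R -> R) (x z : R) : R := AS_dot M A Sm d x z q.
Definition Avf (M : nat) (A : nat -> nat -> R -> R -> R) (vv : nat -> R -> R -> R) (d : nat)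
  (w : nat -> nat -> R -> R -> R) (x z : R) : R := Av_dot M A vv d x z w.

Lemma C2_AS M A Sm d q : (forall k l, (k < M)%nat -> (l < M)%nat -> C2 (A k l)) ->
  (forall l, (l < M)%nat -> C2 (Sm l d)) -> (forall k, (k < M)%nat -> C2 (q k)) -> C2 (ASf M A Sm d q).
Proof. intros HA HS Hq. unfold ASf, AS_dot. apply C2_sumR; intros. apply C2_mult; auto.
  apply C2_sumR; intros. apply C2_mult; auto. Qed.
Lemma C2_Av M A vv d w : (forall k l, (k < M)%nat -> (l < M)%nat -> C2 (A k l)) ->
  (forall l, (l < M)%nat -> C2 (vv l)) -> (forall k, (k < M)%nat -> C2 (w k d)) -> C2 (Avf M A vv d w).
Proof. intros HA HS Hq. unfold Avf, Av_dot. apply C2_sumR; intros. apply C2_mult; auto.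
  apply C2_sumR; intros. apply C2_mult; auto. Qed.

Lemma Rep_mulC_l t P F F' : C2 P -> Rep t F F' -> Rep t (fun s x z => P x z * F s x z) (fun x z => P x z * F' x z).
Proof. intros HP HF. eapply Rep_ext. apply (Rep_mult t _ _ _ _ (Rep_const t P HP) HF).
  exists (mkposreal 1 Rlt_0_1); intros; reflexivity. intros; cbv beta; ring. Qed.
Lemma Rep_mulC_r t P F F' : C2 P -> Rep t F F' -> Rep t (fun s x z => F s x z * P x z) (fun x z => F' x z * P x z).
Proof. intros HP HF. eapply Rep_ext. apply (Rep_mult t _ _ _ _ HF (Rep_const t P HP)).
  exists (mkposreal 1 Rlt_0_1); intros; reflexivity. intros; cbv beta; ring. Qed.


Definition ecoef (k r : nat) (a b : nat) : R :=
  if andb (Nat.eqb a (r / S k)) (Nat.eqb b (r mod S k)) then 1 else 0.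
Definition psi (k r : nat) : R -> R -> R := poly2 k (ecoef k r).

Lemma psi_poly k r : is_poly2 k (psi k r).
Proof. exists (ecoef k r). reflexivity. Qed.
Lemma C2_psi k r : C2 (psi k r).
Proof. apply C2_poly2. Qed.

Lemma coef_flat k (c : nat -> nat -> R) a b : (a < S k)%nat -> (b < S k)%nat ->
  sumR (S k * S k) (fun r => c (r / S k)%nat (r mod S k)%nat * ecoef k r a b) = c a b.
Proof. intros Ha Hb. rewrite sumR_mul.
  rewrite (sumR_ext (S k) _ (fun a' => if Nat.eqb a' a then sumR (S k) (fun b' => if Nat.eqb b' b then c a' b' else 0) else 0)).
  rewrite sumR_delta by auto. rewrite sumR_delta by auto. reflexivity.
  intros a' Ha'. destruct (Nat.eqb_spec a' a).
  - apply sumR_ext. intros b' Hb'. destruct (divmod_pair a' b' (S k) Hb') as [E1 E2].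
    unfold ecoef. rewrite E1, E2. destruct (Nat.eqb_spec b' b); subst.
    + rewrite !Nat.eqb_refl. simpl. ring.
    + rewrite Nat.eqb_refl. destruct (Nat.eqb_spec b b'); [lia|]. simpl; ring.
  - apply sumR_zero. intros b' Hb'. destruct (divmod_pair a' b' (S k) Hb') as [E1 E2].
    unfold ecoef. rewrite E1, E2. destruct (Nat.eqb_spec a a'); [lia|]. simpl; ring. Qed.

Lemma poly2_flat k c x z : poly2 k c x z = sumR (S k * S k) (fun r => c (r / S k)%nat (r mod S k)%nat * psi k r x z).
Proof. unfold psi, poly2.
  rewrite (sumR_ext (S k * S k) _ (fun r => sumR (S k) (fun a => sumR (S k - a) (fun b =>
      c (r / S k)%nat (r mod S k)%nat * ecoef k r a b * x ^ a * z ^ b)))).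
  2:{ intros r Hr. rewrite <- sumR_scal_l. apply sumR_ext; intros. rewrite <- sumR_scal_l. apply sumR_ext; intros. ring. }
  rewrite sumR_swap. apply sumR_ext. intros a Ha. rewrite sumR_swap. apply sumR_ext. intros b Hb.
  rewrite sumR_scal_r, sumR_scal_r. rewrite coef_flat by lia. reflexivity. Qed.

Section Gram.
Variables (x0 x1 z0 z1 : R) (k : nat).
Hypothesis (Hx : x0 <= x1) (Hz : z0 <= z1).
Let N := (S k * S k)%nat.
Let PS (y : nat -> R) (x z : R) := sumR N (fun r => y r * psi k r x z).

Lemma C2_PS y : C2 (PS y).
Proof. unfold PS. apply C2_sumR; intros; apply C2_mult; [apply C2_const|apply C2_psi]. Qed.

Lemma expand1 y h : C2 h -> sumR N (fun r => y r * cint x0 x1 z0 z1 (fun x z => psi k r x z * h x z)) =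
  cint x0 x1 z0 z1 (fun x z => PS y x z * h x z).
Proof. intros Hh. unfold PS.
  rewrite (cint_ext x0 x1 z0 z1 Hx Hz _ (fun x z => sumR N (fun r => y r * (psi k r x z * h x z)))).
  2:{ intros. rewrite <- sumR_scal_r. apply sumR_ext; intros; ring. }
  rewrite cint_sumR; auto. apply sumR_ext; intros. rewrite cint_scal; auto.
  apply C2_mult; auto; apply C2_psi.
  intros; apply C2_mult; [apply C2_const|apply C2_mult; auto; apply C2_psi]. Qed.

Lemma gram_cell : exists C, 0 <= C /\ forall f, is_poly2 k f ->
  cint x0 x1 z0 z1 (fun x z => f x z * f x z) <=
  C * sumR N (fun r => cint x0 x1 z0 z1 (fun x z => f x z * psi k r x z) ^ 2).
Proof.
  set (g := fun r r' => cint x0 x1 z0 z1 (fun x z => psi k r x z * psi k r' x z)).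
  assert (Hgv : forall y r, gv N g y r = cint x0 x1 z0 z1 (fun x z => PS y x z * psi k r x z)).
  { intros y r. rewrite <- expand1 by apply C2_psi. unfold gv, g. apply sumR_ext; intros r' _.
    rewrite Rmult_comm. f_equal. apply cint_ext; auto. intros; ring. }
  assert (Hqf : forall y, qf N g y = cint x0 x1 z0 z1 (fun x z => PS y x z * PS y x z)).
  { intros y. rewrite <- expand1 by apply C2_PS. unfold qf. apply sumR_ext; intros r _.
    rewrite Hgv. f_equal. apply cint_ext; auto. intros; ring. }
  destruct (gram_bound N g) as [C [HC HB]].
  { intros; unfold g; apply cint_ext; auto; intros; ring. }
  { intros y. rewrite Hqf. apply cint_ge0; auto. apply C2_mult; apply C2_PS.
    intros; apply Rle_0_sqr. }
  exists C. split; auto. intros f [c Hc].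
  set (y := fun r => c (r / S k)%nat (r mod S k)%nat).
  assert (Hf : forall x z, f x z = PS y x z) by (intros; rewrite Hc; apply poly2_flat).
  specialize (HB y). rewrite Hqf in HB.
  rewrite (cint_ext x0 x1 z0 z1 Hx Hz (fun x z => f x z * f x z) (fun x z => PS y x z * PS y x z)) by (intros; rewrite Hf; auto).
  eapply Rle_trans. apply HB. right. f_equal. apply sumR_ext; intros r _. rewrite Hgv.
  f_equal. apply cint_ext; auto. intros; rewrite Hf; auto. Qed.
End Gram.


Lemma poly_minus k f g : is_poly2 k f -> is_poly2 k g -> is_poly2 k (fun x z => f x z - g x z).
Proof. intros [c1 H1] [c2 H2]. exists (fun p q => c1 p q - c2 p q). intros x z.
  rewrite H1, H2. unfold poly2. rewrite <- sumR_minus. apply sumR_ext; intros.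
  rewrite <- sumR_minus. apply sumR_ext; intros. ring. Qed.

Lemma poly_zero k : is_poly2 k (fun _ _ => 0).
Proof. exists (fun _ _ => 0). intros. unfold poly2. symmetry. apply sumR_zero; intros.
  apply sumR_zero; intros. ring. Qed.

Lemma L1 M (A : nat -> nat -> R -> R -> R) Sm d x z q : (forall k l, (k < M)%nat -> (l < M)%nat -> A k l x z = A l k x z) ->
  AS_dot M A Sm d x z q = sumR M (fun k => sumR M (fun l => A k l x z * q l x z * Sm k d x z)).
Proof. intros Hs. unfold AS_dot.
  rewrite (sumR_ext M _ (fun k => sumR M (fun l => A k l x z * Sm l d x z * q k x z))) by (intros; rewrite <- sumR_scal_r; reflexivity).
  rewrite sumR_swap. apply sumR_ext; intros; apply sumR_ext; intros. rewrite Hs by auto. ring. Qed.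

Lemma L2 M (A : nat -> nat -> R -> R -> R) vv d x z w :
  Av_dot M A vv d x z w = sumR M (fun k => sumR M (fun l => A k l x z * vv l x z * w k d x z)).
Proof. unfold Av_dot. apply sumR_ext; intros. rewrite <- sumR_scal_r. reflexivity. Qed.

Lemma L3 M (A : nat -> nat -> R -> R -> R) d x z w : Av_dot M A zero3 d x z w = 0.
Proof. unfold Av_dot, zero3. apply sumR_zero; intros. rewrite sumR_zero. ring. intros; ring. Qed.

Lemma sum2_plus n m (f g : nat -> nat -> R) :
  sumR n (fun k => sumR m (fun l => f k l + g k l)) = sumR n (fun k => sumR m (fun l => f k l)) + sumR n (fun k => sumR m (fun l => g k l)).
Proof. rewrite <- sumR_plus. apply sumR_ext; intros. apply sumR_plus. Qed.

Ltac rring := match goal with |- @eq _ ?a ?b => change (@eq R a b) end; cbv beta; ring.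

Section Main.
Variables (k M Nx Nz : nat) (xs zs : nat -> R)
  (a : nat -> nat -> nat -> nat -> R -> R -> R)
  (v : R -> nat -> nat -> nat -> R -> R -> R)
  (Sh : R -> nat -> nat -> nat -> nat -> R -> R -> R)
  (c : R -> nat -> nat -> nat -> nat -> nat -> R).
Hypothesis Hxs : forall i, (i < Nx)%nat -> xs i < xs (S i).
Hypothesis Hzs : forall j, (j < Nz)%nat -> zs j < zs (S j).
Hypothesis Hsmooth : forall i j k' l, (i < Nx)%nat -> (j < Nz)%nat ->
      (k' < M)%nat -> (l < M)%nat -> smooth2 (a i j k' l).
Hypothesis Hsym : forall i j k' l x z, (i < Nx)%nat -> (j < Nz)%nat ->
      (k' < M)%nat -> (l < M)%nat ->
      xs i <= x <= xs (S i) -> zs j <= z <= zs (S j) ->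
      a i j k' l x z = a i j l k' x z.
Hypothesis Hvc : forall t i j m x z, 0 < t -> (i < Nx)%nat -> (j < Nz)%nat -> (m < M)%nat ->
          v t i j m x z = poly2 k (c t i j m) x z.
Hypothesis Hvd : forall t i j m p q, 0 < t ->
          ex_derive (fun s => c s i j m p q) t /\
          ex_derive (fun s => Derive (fun r => c r i j m p q) s) t.
Hypothesis HS : forall t i j m d, 0 < t -> (i < Nx)%nat -> (j < Nz)%nat ->
      (m < M)%nat -> (d < 2)%nat -> is_poly2 k (Sh t i j m d).
Hypothesis Heq1 : forall t i j (p : nat -> nat -> nat -> R -> R -> R), 0 < t ->
      (i < Nx)%nat -> (j < Nz)%nat ->
      (forall i' j' m, (i' < Nx)%nat -> (j' < Nz)%nat -> (m < M)%nat ->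
          is_poly2 k (p i' j' m)) ->
      ldg_eq1 M xs zs a v Sh t i j (p i j).
Hypothesis Heq2 : forall t i j (w : nat -> nat -> nat -> nat -> R -> R -> R), 0 < t ->
      (i < Nx)%nat -> (j < Nz)%nat ->
      (forall i' j' m d, (i' < Nx)%nat -> (j' < Nz)%nat -> (m < M)%nat ->
          (d < 2)%nat -> is_poly2 k (w i' j' m d)) ->
      ldg_eq2 M Nx Nz xs zs a v Sh t i j (w i j).

Lemma a_C2 i j k' l : (i < Nx)%nat -> (j < Nz)%nat -> (k' < M)%nat -> (l < M)%nat -> C2 (a i j k' l).
Proof. intros; intros x z. apply (Hsmooth i j k' l H H0 H1 H2 nil x z). Qed.
Lemma pdx_a_C2 i j k' l : (i < Nx)%nat -> (j < Nz)%nat -> (k' < M)%nat -> (l < M)%nat -> C2 (pdx (a i j k' l)).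
Proof. intros; intros x z. apply (Hsmooth i j k' l H H0 H1 H2 (cons true nil) x z). Qed.
Lemma pdz_a_C2 i j k' l : (i < Nx)%nat -> (j < Nz)%nat -> (k' < M)%nat -> (l < M)%nat -> C2 (pdz (a i j k' l)).
Proof. intros; intros x z. apply (Hsmooth i j k' l H H0 H1 H2 (cons false nil) x z). Qed.
Lemma grad_a_C2 d i j k' l : (i < Nx)%nat -> (j < Nz)%nat -> (k' < M)%nat -> (l < M)%nat -> C2 (grad d (a i j k' l)).
Proof. intros. destruct d; simpl. apply pdx_a_C2; auto. apply pdz_a_C2; auto. Qed.
Lemma a_dx i j k' l x z : (i < Nx)%nat -> (j < Nz)%nat -> (k' < M)%nat -> (l < M)%nat ->
  is_derive (fun y => a i j k' l y z) x (pdx (a i j k' l) x z).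
Proof. intros. apply Derive_correct. apply (Hsmooth i j k' l H H0 H1 H2 nil x z). Qed.
Lemma a_dz i j k' l x z : (i < Nx)%nat -> (j < Nz)%nat -> (k' < M)%nat -> (l < M)%nat ->
  is_derive (fun y => a i j k' l x y) z (pdz (a i j k' l) x z).
Proof. intros. apply Derive_correct. apply (Hsmooth i j k' l H H0 H1 H2 nil x z). Qed.

Lemma Rep_psum s (u : nat -> nat -> R -> R) : (forall p q, ex_derive (u p q) s) ->
  Rep s (fun r => psum k (fun p q => u p q r) mono) (psum k (fun p q => Derive (u p q) s) mono).
Proof. intros Hu. unfold psum.
  apply (Rep_sumR s (S k) (fun p r x z => sumR (S k - p) (fun q => u p q r * mono p q x z))
     (fun p x z => sumR (S k - p) (fun q => Derive (u p q) s * mono p q x z))).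
  intros p _. apply (Rep_sumR s (S k - p) (fun q r x z => u p q r * mono p q x z)
     (fun q x z => Derive (u p q) s * mono p q x z)).
  intros q _. apply Rep_coef; auto. apply C2_mono. Qed.

Lemma v_Rep s i j m : 0 < s -> (i < Nx)%nat -> (j < Nz)%nat -> (m < M)%nat ->
  Rep s (fun r => v r i j m) (psum k (fun p q => Derive (fun r => c r i j m p q) s) mono).
Proof. intros Hs Hi Hj Hm. eapply Rep_ext.
  apply (Rep_psum s (fun p q r => c r i j m p q)). intros p q; exact (proj1 (Hvd s i j m p q Hs)).
  exists (mkposreal s Hs). intros r Hr x z. simpl in Hr. cbv beta.
  pose proof (Rabs_def2 _ _ Hr). rewrite (Hvc r i j m x z) by (auto; lra). rewrite poly2_psum. reflexivity.
  intros; reflexivity. Qed.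

Lemma dtv_eq s i j m x z : 0 < s -> (i < Nx)%nat -> (j < Nz)%nat -> (m < M)%nat ->
  dtv v s i j m x z = psum k (fun p q => Derive (fun r => c r i j m p q) s) mono x z.
Proof. intros. unfold dtv. apply is_derive_unique. apply (Rep_pt s (fun r => v r i j m)). apply v_Rep; auto. Qed.

Lemma dtv_poly s i j m : 0 < s -> (i < Nx)%nat -> (j < Nz)%nat -> (m < M)%nat -> is_poly2 k (dtv v s i j m).
Proof. intros. exists (fun p q => Derive (fun r => c r i j m p q) s). intros x z.
  rewrite dtv_eq, poly2_psum; auto. Qed.

Variable t : R.
Hypothesis Ht : 0 < t.

Lemma v_Rep_t i j m : (i < Nx)%nat -> (j < Nz)%nat -> (m < M)%nat ->
  Rep t (fun r => v r i j m) (dtv v t i j m).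
Proof. intros. eapply Rep_ext. apply v_Rep; eauto. exists (mkposreal 1 Rlt_0_1); intros; reflexivity.
  intros; symmetry; apply dtv_eq; auto. Qed.

Lemma dv_Rep i j m : (i < Nx)%nat -> (j < Nz)%nat -> (m < M)%nat ->
  Rep t (fun r => dtv v r i j m) (dttv v t i j m).
Proof. intros Hi Hj Hm.
  assert (HR : Rep t (fun r => dtv v r i j m) (psum k (fun p q => Derive (fun r => Derive (fun r' => c r' i j m p q) r) t) mono)).
  { eapply Rep_ext. apply (Rep_psum t (fun p q r => Derive (fun r' => c r' i j m p q) r)).
    intros p q; exact (proj2 (Hvd t i j m p q Ht)).
    exists (mkposreal t Ht). intros r Hr x z. simpl in Hr. cbv beta.
    pose proof (Rabs_def2 _ _ Hr). rewrite (dtv_eq r i j m x z) by (auto; lra). reflexivity. intros; reflexivity. }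
  eapply Rep_ext. apply HR. exists (mkposreal 1 Rlt_0_1); intros; reflexivity.
  intros x z. unfold dttv. symmetry. apply is_derive_unique. apply (Rep_pt t _ _ x z HR). Qed.

Definition cintc i j := cint (xs i) (xs (S i)) (zs j) (zs (S j)).
Definition inR i j := (i < Nx)%nat /\ (j < Nz)%nat.

Definition X23 (vv : nat -> nat -> nat -> R -> R -> R) (W : nat -> nat -> R -> R -> R) i j x z :=
  sumR M (fun kk => sumR M (fun l => a i j kk l x z * vv i j l x z) * (pdx (W kk 0%nat) x z + pdz (W kk 1%nat) x z))
  + sumR M (fun kk => sumR 2 (fun d => sumR M (fun l => vv i j l x z * grad d (a i j kk l) x z) * W kk d x z)).
Definition SW s i j (W : nat -> nat -> R -> R -> R) x z :=
  sumR M (fun kk => sumR 2 (fun d => Sh s i j kk d x z * W kk d x z)).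
Definition Wpoly (W : nat -> nat -> R -> R -> R) := forall kk d, (kk < M)%nat -> (d < 2)%nat -> is_poly2 k (W kk d).

Lemma cint_split3 x0 x1 z0 z1 f g h : x0 <= x1 -> z0 <= z1 -> C2 f -> C2 (fun x z => g x z + h x z) ->
  cint x0 x1 z0 z1 (fun x z => f x z + g x z + h x z) = cint x0 x1 z0 z1 f + cint x0 x1 z0 z1 (fun x z => g x z + h x z).
Proof. intros. rewrite <- cint_plus; auto. apply cint_ext; auto. intros; ring. Qed.

Lemma v_poly s i j m : 0 < s -> (i < Nx)%nat -> (j < Nz)%nat -> (m < M)%nat -> is_poly2 k (v s i j m).
Proof. intros. exists (c s i j m). intros; apply Hvc; auto. Qed.

Lemma C2_X23 vv W i j : inR i j -> Wpoly W -> (forall l, (l < M)%nat -> C2 (vv i j l)) -> C2 (X23 vv W i j).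
Proof. intros [Hi Hj] HW Hv. unfold X23. apply C2_plus.
  - apply C2_sumR; intros. apply C2_mult. apply C2_sumR; intros. apply C2_mult; auto. apply a_C2; auto.
    apply C2_plus. apply (poly_pdx_C2 k); auto. apply (poly_pdz_C2 k); auto.
  - apply C2_sumR; intros. apply C2_sumR; intros. apply C2_mult. apply C2_sumR; intros. apply C2_mult; auto.
    apply grad_a_C2; auto. apply (poly_C2 k); auto. Qed.

Lemma C2_SW s i j W : 0 < s -> inR i j -> Wpoly W -> C2 (SW s i j W).
Proof. intros Hs [Hi Hj] HW. unfold SW. apply C2_sumR; intros. apply C2_sumR; intros.
  apply C2_mult; apply (poly_C2 k); auto. Qed.

Lemma cell_le i j : inR i j -> xs i <= xs (S i) /\ zs j <= zs (S j).
Proof. intros [Hi Hj]. split; left; auto. Qed.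

Lemma eq2_lin s i j W : 0 < s -> inR i j -> Wpoly W ->
  cintc i j (SW s i j W) = bnd2 M Nx Nz xs zs a (v s) i j W - cintc i j (X23 (v s) W i j).
Proof. intros Hs Hij HW. destruct Hij as [Hi Hj] eqn:Eij.
  pose proof (Heq2 s i j (fun _ _ => W) Hs Hi Hj (fun _ _ m d _ _ Hm Hd => HW m d Hm Hd)) as H.
  unfold ldg_eq2 in H. cbv beta in H. destruct (cell_le i j Hij).
  rewrite cint_split3 in H; auto.
  - unfold cintc, SW, X23. lra.
  - apply (C2_SW s i j W); auto.
  - apply (C2_X23 (v s) W i j); auto. intros; apply (poly_C2 k); apply v_poly; auto.
Qed.
Lemma is_derive_plusR (f g : R -> R) x df dg : is_derive f x df -> is_derive g x dg ->
  is_derive (fun y => f y + g y) x (df + dg).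
Proof. intros; apply (is_derive_plus f g); auto. Qed.
Lemma is_derive_minusR (f g : R -> R) x df dg : is_derive f x df -> is_derive g x dg ->
  is_derive (fun y => f y - g y) x (df - dg).
Proof. intros; apply (is_derive_minus f g); auto. Qed.

Lemma X23_Rep i j W : inR i j -> Wpoly W -> Rep t (fun s => X23 (v s) W i j) (X23 (dtv v t) W i j).
Proof. intros Hij HW. destruct Hij as [Hi Hj] eqn:Eij.
  assert (H1 : Rep t (fun s x z => sumR M (fun kk => sumR M (fun l => a i j kk l x z * v s i j l x z) * (pdx (W kk 0%nat) x z + pdz (W kk 1%nat) x z)))
      (fun x z => sumR M (fun kk => sumR M (fun l => a i j kk l x z * dtv v t i j l x z) * (pdx (W kk 0%nat) x z + pdz (W kk 1%nat) x z)))).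
  { apply (Rep_sumR t M (fun kk s x z => sumR M (fun l => a i j kk l x z * v s i j l x z) * (pdx (W kk 0%nat) x z + pdz (W kk 1%nat) x z))
      (fun kk x z => sumR M (fun l => a i j kk l x z * dtv v t i j l x z) * (pdx (W kk 0%nat) x z + pdz (W kk 1%nat) x z))).
    intros kk Hk.
    apply (Rep_mulC_r t (fun x z => pdx (W kk 0%nat) x z + pdz (W kk 1%nat) x z)
      (fun s x z => sumR M (fun l => a i j kk l x z * v s i j l x z)) (fun x z => sumR M (fun l => a i j kk l x z * dtv v t i j l x z))).
    apply C2_plus. apply (poly_pdx_C2 k); auto. apply (poly_pdz_C2 k); auto.
    apply (Rep_sumR t M (fun l s x z => a i j kk l x z * v s i j l x z) (fun l x z => a i j kk l x z * dtv v t i j l x z)).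
    intros l Hl. apply (Rep_mulC_l t (a i j kk l) (fun r => v r i j l)). apply a_C2; auto. apply v_Rep_t; auto. }
  assert (H2 : Rep t (fun s x z => sumR M (fun kk => sumR 2 (fun d => sumR M (fun l => v s i j l x z * grad d (a i j kk l) x z) * W kk d x z)))
      (fun x z => sumR M (fun kk => sumR 2 (fun d => sumR M (fun l => dtv v t i j l x z * grad d (a i j kk l) x z) * W kk d x z)))).
  { apply (Rep_sumR t M (fun kk s x z => sumR 2 (fun d => sumR M (fun l => v s i j l x z * grad d (a i j kk l) x z) * W kk d x z))
      (fun kk x z => sumR 2 (fun d => sumR M (fun l => dtv v t i j l x z * grad d (a i j kk l) x z) * W kk d x z))).
    intros kk Hk.
    apply (Rep_sumR t 2 (fun d s x z => sumR M (fun l => v s i j l x z * grad d (a i j kk l) x z) * W kk d x z)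
      (fun d x z => sumR M (fun l => dtv v t i j l x z * grad d (a i j kk l) x z) * W kk d x z)).
    intros d Hd.
    apply (Rep_mulC_r t (W kk d) (fun s x z => sumR M (fun l => v s i j l x z * grad d (a i j kk l) x z))
       (fun x z => sumR M (fun l => dtv v t i j l x z * grad d (a i j kk l) x z))).
    apply (poly_C2 k); auto.
    apply (Rep_sumR t M (fun l s x z => v s i j l x z * grad d (a i j kk l) x z) (fun l x z => dtv v t i j l x z * grad d (a i j kk l) x z)).
    intros l Hl. apply (Rep_mulC_r t (grad d (a i j kk l)) (fun r => v r i j l)). apply grad_a_C2; auto. apply v_Rep_t; auto. }
  exact (Rep_plus t _ _ _ _ H1 H2). Qed.

Lemma Av_Rep i j d W (VV : R -> nat -> R -> R -> R) (VV' : nat -> R -> R -> R) : inR i j -> Wpoly W -> (d < 2)%nat ->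
  (forall l, (l < M)%nat -> Rep t (fun s => VV s l) (VV' l)) ->
  Rep t (fun s x z => Av_dot M (a i j) (VV s) d x z W) (fun x z => Av_dot M (a i j) VV' d x z W).
Proof. intros [Hi Hj] HW Hd HV. unfold Av_dot.
  apply (Rep_sumR t M (fun kk s x z => sumR M (fun l => a i j kk l x z * VV s l x z) * W kk d x z)
     (fun kk x z => sumR M (fun l => a i j kk l x z * VV' l x z) * W kk d x z)).
  intros kk Hk.
  apply (Rep_mulC_r t (W kk d) (fun s x z => sumR M (fun l => a i j kk l x z * VV s l x z)) (fun x z => sumR M (fun l => a i j kk l x z * VV' l x z))).
  apply (poly_C2 k); auto.
  apply (Rep_sumR t M (fun l s x z => a i j kk l x z * VV s l x z) (fun l x z => a i j kk l x z * VV' l x z)).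
  intros l Hl. apply (Rep_mulC_l t (a i j kk l) (fun s => VV s l)). apply a_C2; auto. auto. Qed.

Lemma VIf (b : bool) i' j' l : (b = true -> (i' < Nx)%nat /\ (j' < Nz)%nat) -> (l < M)%nat ->
  Rep t (fun s => (if b then v s i' j' else zero3) l) ((if b then dtv v t i' j' else zero3) l).
Proof. intros Hb Hl. destruct b. destruct (Hb eq_refl). apply v_Rep_t; auto.
  unfold zero3. apply (Rep_const t (fun _ _ => 0)). apply C2_const. Qed.

Lemma bnd2_deriv i j W : inR i j -> Wpoly W ->
  is_derive (fun s => bnd2 M Nx Nz xs zs a (v s) i j W) t (bnd2 M Nx Nz xs zs a (dtv v t) i j W).
Proof. intros Hij HW. pose proof Hij as [Hi Hj]. unfold bnd2. cbv zeta.
  assert (HR : forall l, (l < M)%nat -> Rep t (fun s => (if Nat.ltb (S i) Nx then v s (S i) j else zero3) l) ((if Nat.ltb (S i) Nx then dtv v t (S i) j else zero3) l)).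
  { intros; apply VIf; auto. intros Hb; apply Nat.ltb_lt in Hb; auto. }
  assert (HL : forall l, (l < M)%nat -> Rep t (fun s => (if Nat.ltb 0 i then v s i j else zero3) l) ((if Nat.ltb 0 i then dtv v t i j else zero3) l)).
  { intros; apply VIf; auto. }
  assert (HT : forall l, (l < M)%nat -> Rep t (fun s => (if Nat.ltb (S j) Nz then v s i (S j) else zero3) l) ((if Nat.ltb (S j) Nz then dtv v t i (S j) else zero3) l)).
  { intros; apply VIf; auto. intros Hb; apply Nat.ltb_lt in Hb; auto. }
  assert (HB : forall l, (l < M)%nat -> Rep t (fun s => (if Nat.ltb 0 j then v s i j else zero3) l) ((if Nat.ltb 0 j then dtv v t i j else zero3) l)).
  { intros; apply VIf; auto. }
  pose proof (Av_Rep i j 0 W _ _ Hij HW ltac:(lia) HR) as AR.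
  pose proof (Av_Rep i j 0 W _ _ Hij HW ltac:(lia) HL) as AL.
  pose proof (Av_Rep i j 1 W _ _ Hij HW ltac:(lia) HT) as AT.
  pose proof (Av_Rep i j 1 W _ _ Hij HW ltac:(lia) HB) as AB.
  pose proof (Rep_RInt_z t _ _ 0 (zs j) (zs (S j)) (Rep_minus t _ _ _ _ (Rep_fixx t _ _ (xs (S i)) AR) (Rep_fixx t _ _ (xs i) AL))) as D1.
  pose proof (Rep_RInt_x t _ _ 0 (xs i) (xs (S i)) (Rep_minus t _ _ _ _ (Rep_fixz t _ _ (zs (S j)) AT) (Rep_fixz t _ _ (zs j) AB))) as D2.
  exact (is_derive_plusR _ _ t _ _ D1 D2). Qed.

Definition Lam i j W := bnd2 M Nx Nz xs zs a (dtv v t) i j W - cintc i j (X23 (dtv v t) W i j).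

Lemma SW_deriv i j W : inR i j -> Wpoly W ->
  is_derive (fun s => cintc i j (SW s i j W)) t (Lam i j W).
Proof. intros Hij HW. destruct (cell_le i j Hij) as [Hx Hz].
  apply (is_derive_ext_loc (fun s => bnd2 M Nx Nz xs zs a (v s) i j W - cintc i j (X23 (v s) W i j))).
  { apply (locally_ball t (mkposreal t Ht)). intros s Hs. simpl in Hs. pose proof (Rabs_def2 _ _ Hs).
    symmetry. apply eq2_lin; auto. lra. }
  unfold Lam. apply is_derive_minusR. apply bnd2_deriv; auto.
  unfold cintc. apply (Rep_cint t (fun s => X23 (v s) W i j)); auto. apply X23_Rep; auto. Qed.
Lemma Wpoly_Sh s i j : 0 < s -> inR i j -> Wpoly (Sh s i j).
Proof. intros Hs [Hi Hj] kk d Hk Hd. apply HS; auto. Qed.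

Definition Wd (m d r : nat) : nat -> nat -> R -> R -> R :=
  fun kk d' => if andb (Nat.eqb kk m) (Nat.eqb d' d) then psi k r else (fun _ _ => 0).

Lemma Wpoly_Wd m d r : Wpoly (Wd m d r).
Proof. intros kk d' _ _. unfold Wd. destruct (andb _ _). apply psi_poly. apply poly_zero. Qed.

Lemma SW_delta s i j m d r x z : (m < M)%nat -> (d < 2)%nat ->
  SW s i j (Wd m d r) x z = Sh s i j m d x z * psi k r x z.
Proof. intros Hm Hd. unfold SW, Wd.
  rewrite (sumR_ext M _ (fun kk => if Nat.eqb kk m then sumR 2 (fun d' => if Nat.eqb d' d then Sh s i j kk d' x z * psi k r x z else 0) else 0)).
  rewrite sumR_delta by auto. rewrite sumR_delta by auto. reflexivity.
  intros kk Hk. destruct (Nat.eqb kk m).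
  - apply sumR_ext; intros d' _. destruct (Nat.eqb d' d); simpl; ring.
  - apply sumR_zero; intros d' _. simpl. ring. Qed.

Lemma sum2_comb n m (f g h : nat -> nat -> R) :
  sumR n (fun p => sumR m (fun q => f p q)) + 2 * sumR n (fun p => sumR m (fun q => g p q)) - sumR n (fun p => sumR m (fun q => h p q))
  = sumR n (fun p => sumR m (fun q => f p q + 2 * g p q - h p q)).
Proof. rewrite <- sumR_scal_l, <- sumR_plus, <- sumR_minus. apply sumR_ext; intros.
  rewrite <- sumR_scal_l, <- sumR_plus, <- sumR_minus. reflexivity. Qed.

Section Cell.
Variables (i j : nat).
Hypothesis Hij : inR i j.

Definition ES s := cintc i j (fun x z => sumR M (fun m => sumR 2 (fun d => Sh s i j m d x z * Sh s i j m d x z))).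
Definition Phi s := cintc i j (SW s i j (Sh t i j)).
Definition Rr s := cintc i j (fun x z => sumR M (fun m => sumR 2 (fun d =>
   (Sh s i j m d x z - Sh t i j m d x z) * (Sh s i j m d x z - Sh t i j m d x z)))).

Lemma C2_Sh s m d : 0 < s -> (m < M)%nat -> (d < 2)%nat -> C2 (Sh s i j m d).
Proof. intros. destruct Hij. apply (poly_C2 k). apply HS; auto. Qed.

Lemma ES_decomp s : 0 < s -> ES s = Rr s + 2 * Phi s - Phi t.
Proof. intros Hs. destruct (cell_le i j Hij) as [Hx Hz].
  assert (C2D : C2 (fun x z => sumR M (fun m => sumR 2 (fun d =>
   (Sh s i j m d x z - Sh t i j m d x z) * (Sh s i j m d x z - Sh t i j m d x z))))).
  { apply C2_sumR; intros; apply C2_sumR; intros. apply C2_mult; apply C2_minus; apply C2_Sh; auto. }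
  unfold ES, Rr, Phi, cintc.
  rewrite <- cint_scal, <- cint_plus, <- cint_minus; auto.
  - apply cint_ext; auto. intros x z _ _. unfold SW. rewrite sum2_comb. apply sumR_ext; intros; apply sumR_ext; intros. ring.
  - apply C2_plus; auto. apply C2_mult. apply C2_const. apply C2_SW; auto. apply Wpoly_Sh; auto.
  - apply C2_SW; auto. apply Wpoly_Sh; auto.
  - apply C2_mult. apply C2_const. apply C2_SW; auto. apply Wpoly_Sh; auto.
  - apply C2_SW; auto. apply Wpoly_Sh; auto. Qed.
Definition Fm m d r s := cintc i j (SW s i j (Wd m d r)).

Lemma Fm_eq m d r s : (m < M)%nat -> (d < 2)%nat ->
  Fm m d r s = cintc i j (fun x z => Sh s i j m d x z * psi k r x z).
Proof. intros. destruct (cell_le i j Hij). unfold Fm, cintc. apply cint_ext; auto. intros; apply SW_delta; auto. Qed.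

Lemma Rr_deriv : is_derive Rr t 0.
Proof. destruct (cell_le i j Hij) as [Hx Hz]. pose proof Hij as [Hi Hj].
  destruct (gram_cell (xs i) (xs (S i)) (zs j) (zs (S j)) k Hx Hz) as [C [HC HB]].
  set (N := (S k * S k)%nat) in *.
  set (h := fun s => C * sumR M (fun m => sumR 2 (fun d => sumR N (fun r => (Fm m d r s - Fm m d r t) ^ 2)))).
  apply (squeeze0 Rr h t (mkposreal t Ht)).
  - unfold h. eapply is_derive_l. apply is_derive_scal.
    apply is_derive_sumR; intros m Hm. apply is_derive_sumR; intros d Hd. apply is_derive_sumR; intros r Hr.
    apply (is_derive_pow (fun s => Fm m d r s - Fm m d r t)).
    apply is_derive_minusR. apply SW_deriv; auto. apply Wpoly_Wd.
    apply (is_derive_const (K:=R_AbsRing) (V:=R_NormedModule)).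
    rewrite (sumR_zero M) by (intros; apply sumR_zero; intros; apply sumR_zero; intros; simpl; unfold zero; simpl; ring). apply Rmult_0_r.
  - unfold h. rewrite (sumR_zero M) by (intros; apply sumR_zero; intros; apply sumR_zero; intros; simpl; ring). ring.
  - unfold Rr, cintc. rewrite (cint_ext _ _ _ _ Hx Hz _ (fun x z => 0 * (fun _ _ => 0) x z)).
    rewrite cint_scal; auto. ring. apply C2_const.
    intros. rewrite sumR_zero. ring. intros; apply sumR_zero; intros. ring.
  - intros s Hs. simpl in Hs. pose proof (Rabs_def2 _ _ Hs) as [Hs1 Hs2].
    assert (Hs0 : 0 < s) by lra.
    assert (HD : forall m d, (m < M)%nat -> (d < 2)%nat -> C2 (fun x z => (Sh s i j m d x z - Sh t i j m d x z) * (Sh s i j m d x z - Sh t i j m d x z))).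
    { intros. apply C2_mult; apply C2_minus; apply C2_Sh; auto. }
    assert (HRs : Rr s = sumR M (fun m => sumR 2 (fun d => cintc i j (fun x z => (Sh s i j m d x z - Sh t i j m d x z) * (Sh s i j m d x z - Sh t i j m d x z))))).
    { unfold Rr, cintc. rewrite cint_sumR; auto. apply sumR_ext; intros. rewrite cint_sumR; auto.
      intros. apply C2_sumR; intros. auto. }
    assert (Hpos : 0 <= Rr s).
    { rewrite HRs. apply sumR_ge0; intros; apply sumR_ge0; intros. unfold cintc. apply cint_ge0; auto.
      intros; apply Rle_0_sqr. }
    rewrite Rabs_pos_eq by auto. rewrite HRs. unfold h. rewrite <- sumR_scal_l. apply sumR_le; intros m Hm.
    rewrite <- sumR_scal_l. apply sumR_le; intros d Hd.
    eapply Rle_trans. apply HB. apply poly_minus; apply HS; auto.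
    right. f_equal. apply sumR_ext; intros r Hr. f_equal.
    rewrite !Fm_eq by auto. unfold cintc. rewrite <- cint_minus; auto.
    apply cint_ext; auto. intros; ring.
    apply C2_mult; [apply C2_Sh; auto|apply C2_psi].
    apply C2_mult; [apply C2_Sh; auto|apply C2_psi]. Qed.

Lemma ES_deriv : is_derive ES t (2 * Lam i j (Sh t i j)).
Proof. apply (is_derive_ext_loc (fun s => Rr s + 2 * Phi s - Phi t)).
  { apply (locally_ball t (mkposreal t Ht)). intros s Hs. simpl in Hs. pose proof (Rabs_def2 _ _ Hs).
    symmetry. apply ES_decomp. lra. }
  eapply is_derive_l. apply is_derive_minusR. apply is_derive_plusR. apply Rr_deriv.
  apply is_derive_scal. unfold Phi. apply SW_deriv; auto. apply Wpoly_Sh; auto.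
  apply (is_derive_const (K:=R_AbsRing) (V:=R_NormedModule)). simpl; unfold zero; simpl; ring. Qed.
End Cell.
Lemma sumR_2 f : sumR 2 f = f 0%nat + f 1%nat.
Proof. simpl. ring. Qed.

Lemma swap_sym (A : nat -> nat -> R) (Sm q : nat -> R) : (forall p q, (p < M)%nat -> (q < M)%nat -> A p q = A q p) ->
  sumR M (fun p => sumR M (fun l => A p l * Sm l) * q p) = sumR M (fun p => sumR M (fun l => A p l * q l * Sm p)).
Proof. intros Hs. rewrite (sumR_ext M _ (fun p => sumR M (fun l => A p l * Sm l * q p))) by (intros; rewrite <- sumR_scal_r; reflexivity).
  rewrite sumR_swap. apply sumR_ext; intros; apply sumR_ext; intros. rewrite Hs by auto. ring. Qed.

Definition eR i j z := Av_dot M (a i j) (if Nat.ltb (S i) Nx then dtv v t (S i) j else zero3) 0 (xs (S i)) z (Sh t i j).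
Definition eT i j x := Av_dot M (a i j) (if Nat.ltb (S j) Nz then dtv v t i (S j) else zero3) 1 x (zs (S j)) (Sh t i j).
Definition ER i j := RInt (fun z => eR i j z) (zs j) (zs (S j)).
Definition ET i j := RInt (fun x => eT i j x) (xs i) (xs (S i)).

Lemma cA i j : inR i j -> forall p q, (p < M)%nat -> (q < M)%nat -> C2 (a i j p q).
Proof. intros [] p q Hp Hq; apply a_C2; auto. Qed.
Lemma cS i j d : inR i j -> (d < 2)%nat -> forall l, (l < M)%nat -> C2 (Sh t i j l d).
Proof. intros [] Hd l Hl; apply (poly_C2 k); apply HS; auto. Qed.
Lemma cSw i j d : inR i j -> (d < 2)%nat -> forall l, (l < M)%nat -> C2 (Sh t i j l d).
Proof. apply cS. Qed.
Lemma cV i j : inR i j -> forall l, (l < M)%nat -> C2 (dtv v t i j l).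
Proof. intros [] l Hl; apply (poly_C2 k); apply dtv_poly; auto. Qed.
Lemma cVif (b : bool) i j : (b = true -> inR i j) -> forall l, (l < M)%nat -> C2 ((if b then dtv v t i j else zero3) l).
Proof. intros H l Hl. destruct b. apply cV; auto. unfold zero3. apply C2_const. Qed.

Lemma exASz A Sm d q x0 z0 z1 : (forall p q, (p < M)%nat -> (q < M)%nat -> C2 (A p q)) ->
  (forall l, (l < M)%nat -> C2 (Sm l d)) -> (forall l, (l < M)%nat -> C2 (q l)) ->
  ex_RInt (fun z => AS_dot M A Sm d x0 z q) z0 z1.
Proof. intros. apply (ex_RInt_z (ASf M A Sm d q) x0). apply C2_AS; auto. Qed.
Lemma exASx A Sm d q x0 x1 z0 : (forall p q, (p < M)%nat -> (q < M)%nat -> C2 (A p q)) ->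
  (forall l, (l < M)%nat -> C2 (Sm l d)) -> (forall l, (l < M)%nat -> C2 (q l)) ->
  ex_RInt (fun x => AS_dot M A Sm d x z0 q) x0 x1.
Proof. intros. apply (ex_RInt_x (ASf M A Sm d q) z0). apply C2_AS; auto. Qed.
Lemma exAvz A vv d w x0 z0 z1 : (forall p q, (p < M)%nat -> (q < M)%nat -> C2 (A p q)) ->
  (forall l, (l < M)%nat -> C2 (vv l)) -> (forall l, (l < M)%nat -> C2 (w l d)) ->
  ex_RInt (fun z => Av_dot M A vv d x0 z w) z0 z1.
Proof. intros. apply (ex_RInt_z (Avf M A vv d w) x0). apply C2_Av; auto. Qed.
Lemma exAvx A vv d w x0 x1 z0 : (forall p q, (p < M)%nat -> (q < M)%nat -> C2 (A p q)) ->
  (forall l, (l < M)%nat -> C2 (vv l)) -> (forall l, (l < M)%nat -> C2 (w l d)) ->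
  ex_RInt (fun x => Av_dot M A vv d x z0 w) x0 x1.
Proof. intros. apply (ex_RInt_x (Avf M A vv d w) z0). apply C2_Av; auto. Qed.
Lemma ex_RInt_minusR' (f g : R -> R) a0 b0 : ex_RInt f a0 b0 -> ex_RInt g a0 b0 -> ex_RInt (fun x => f x - g x) a0 b0.
Proof. intros; apply (ex_RInt_minus f g); auto. Qed.

Lemma ex_RInt_plusR' (f g : R -> R) a0 b0 : ex_RInt f a0 b0 -> ex_RInt g a0 b0 -> ex_RInt (fun x => f x + g x) a0 b0.
Proof. intros; apply (ex_RInt_plus f g); auto. Qed.

Lemma arith4 a1 b1 a2 b2 c1 c2 : a1 + b1 + (a2 + b2) - (c1 + c2) = (a1 + a2 - c1) + (b1 + b2 - c2).
Proof. ring. Qed.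

Section Cell2.
Variables (i j : nat).
Hypothesis Hij : inR i j.

Definition vd := dtv v t i j.
Definition Y1 x z := sumR M (fun kk => sumR 2 (fun d => sumR M (fun l => a i j kk l x z * Sh t i j l d x z) * grad d (vd kk) x z)).
Definition Fd d x z := sumR M (fun kk => sumR M (fun l => a i j kk l x z * vd l x z * Sh t i j kk d x z)).
Definition Gx x z := sumR M (fun kk => sumR M (fun l => pdx (a i j kk l) x z * vd l x z * Sh t i j kk 0 x z
   + a i j kk l x z * pdx (vd l) x z * Sh t i j kk 0 x z + a i j kk l x z * vd l x z * pdx (Sh t i j kk 0) x z)).
Definition Gz x z := sumR M (fun kk => sumR M (fun l => pdz (a i j kk l) x z * vd l x z * Sh t i j kk 1 x z
   + a i j kk l x z * pdz (vd l) x z * Sh t i j kk 1 x z + a i j kk l x z * vd l x z * pdz (Sh t i j kk 1) x z)).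

Lemma vd_poly l : (l < M)%nat -> is_poly2 k (vd l).
Proof. intros. destruct Hij. apply dtv_poly; auto. Qed.
Lemma S_poly kk d : (kk < M)%nat -> (d < 2)%nat -> is_poly2 k (Sh t i j kk d).
Proof. intros. destruct Hij. apply HS; auto. Qed.

Lemma F0_dx x z : is_derive (fun y => Fd 0 y z) x (Gx x z).
Proof. destruct Hij as [Hi Hj]. unfold Fd, Gx. apply is_derive_sumR; intros kk Hk. apply is_derive_sumR; intros l Hl.
  eapply is_derive_l. apply (is_derive_multR (fun y => a i j kk l y z * vd l y z)).
  apply (is_derive_multR (fun y => a i j kk l y z)). apply a_dx; auto. apply (poly_dx k). apply vd_poly; auto.
  apply (poly_dx k). apply S_poly; [auto|lia]. rring. Qed.
Lemma F1_dz x z : is_derive (fun y => Fd 1 x y) z (Gz x z).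
Proof. destruct Hij as [Hi Hj]. unfold Fd, Gz. apply is_derive_sumR; intros kk Hk. apply is_derive_sumR; intros l Hl.
  eapply is_derive_l. apply (is_derive_multR (fun y => a i j kk l x y * vd l x y)).
  apply (is_derive_multR (fun y => a i j kk l x y)). apply a_dz; auto. apply (poly_dz k). apply vd_poly; auto.
  apply (poly_dz k). apply S_poly; [auto|lia]. rring. Qed.

Lemma C2_Fd d : (d < 2)%nat -> C2 (Fd d).
Proof. intros Hd. destruct Hij as [Hi Hj]. unfold Fd. apply C2_sumR; intros; apply C2_sumR; intros.
  apply C2_mult; [apply C2_mult|]. apply a_C2; auto. apply (poly_C2 k); apply vd_poly; auto. apply (poly_C2 k); apply S_poly; auto. Qed.
Lemma C2_Gx : C2 Gx.
Proof. destruct Hij as [Hi Hj]. unfold Gx. apply C2_sumR; intros; apply C2_sumR; intros.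
  repeat apply C2_plus; repeat apply C2_mult; try (apply a_C2; auto); try (apply pdx_a_C2; auto);
  try (apply (poly_C2 k); first [apply vd_poly | apply S_poly]; auto; lia);
  try (apply (poly_pdx_C2 k); first [apply vd_poly | apply S_poly]; auto; lia). Qed.
Lemma C2_Gz : C2 Gz.
Proof. destruct Hij as [Hi Hj]. unfold Gz. apply C2_sumR; intros; apply C2_sumR; intros.
  repeat apply C2_plus; repeat apply C2_mult; try (apply a_C2; auto); try (apply pdz_a_C2; auto);
  try (apply (poly_C2 k); first [apply vd_poly | apply S_poly]; auto; lia);
  try (apply (poly_pdz_C2 k); first [apply vd_poly | apply S_poly]; auto; lia). Qed.

Lemma cell_identity x z : xs i <= x <= xs (S i) -> zs j <= z <= zs (S j) ->
  Y1 x z + X23 (dtv v t) (Sh t i j) i j x z = Gx x z + Gz x z.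
Proof. intros Hx Hz. destruct Hij as [Hi Hj].
  assert (Hs : forall p q, (p < M)%nat -> (q < M)%nat -> a i j p q x z = a i j q p x z) by (intros; apply Hsym; auto).
  assert (EY : Y1 x z = sumR M (fun p => sumR M (fun l => a i j p l x z * pdx (vd l) x z * Sh t i j p 0 x z
      + a i j p l x z * pdz (vd l) x z * Sh t i j p 1 x z))).
  { unfold Y1. rewrite (sumR_ext M _ (fun p => sumR M (fun l => a i j p l x z * Sh t i j l 0%nat x z) * pdx (vd p) x z
       + sumR M (fun l => a i j p l x z * Sh t i j l 1%nat x z) * pdz (vd p) x z)) by (intros; rewrite sumR_2; reflexivity).
    rewrite sumR_plus, sum2_plus.
    rewrite (swap_sym (fun p l => a i j p l x z) (fun l => Sh t i j l 0%nat x z) (fun p => pdx (vd p) x z)) by auto.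
    rewrite (swap_sym (fun p l => a i j p l x z) (fun l => Sh t i j l 1%nat x z) (fun p => pdz (vd p) x z)) by auto.
    reflexivity. }
  assert (EX : X23 (dtv v t) (Sh t i j) i j x z = sumR M (fun p => sumR M (fun l =>
      a i j p l x z * vd l x z * (pdx (Sh t i j p 0%nat) x z + pdz (Sh t i j p 1%nat) x z)
      + (vd l x z * pdx (a i j p l) x z * Sh t i j p 0 x z + vd l x z * pdz (a i j p l) x z * Sh t i j p 1 x z)))).
  { unfold X23. rewrite sum2_plus. f_equal.
    - apply sumR_ext; intros. rewrite <- sumR_scal_r. reflexivity.
    - apply sumR_ext; intros. rewrite sumR_2. simpl grad. rewrite <- !sumR_scal_r, <- sumR_plus. reflexivity. }
  rewrite EY, EX. unfold Gx, Gz. rewrite <- !sum2_plus. apply sumR_ext; intros; apply sumR_ext; intros. ring. Qed.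
Lemma cell_div : cintc i j (fun x z => Y1 x z + X23 (dtv v t) (Sh t i j) i j x z) =
  RInt (fun z => Fd 0 (xs (S i)) z - Fd 0 (xs i) z) (zs j) (zs (S j)) + RInt (fun x => Fd 1 x (zs (S j)) - Fd 1 x (zs j)) (xs i) (xs (S i)).
Proof. destruct (cell_le i j Hij) as [Hx Hz]. unfold cintc.
  rewrite (cint_ext _ _ _ _ Hx Hz _ (fun x z => Gx x z + Gz x z)) by (intros; apply cell_identity; auto).
  rewrite cint_plus; auto. 2: apply C2_Gx. 2: apply C2_Gz.
  rewrite (div_x (Fd 0) Gx); auto. rewrite (div_z (Fd 1) Gz); auto.
  apply F1_dz. apply C2_Gz. apply F0_dx. apply C2_Gx. apply C2_Fd; lia. Qed.

Ltac vif := apply cVif; let Hb := fresh "Hb" in intro Hb;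
   first [discriminate Hb | split; lia | apply Nat.ltb_lt in Hb; split; lia].

Lemma exFdz d x0 z0 z1 : (d < 2)%nat -> ex_RInt (fun z => Fd d x0 z) z0 z1.
Proof. intros; apply (ex_RInt_z (Fd d)); apply C2_Fd; auto. Qed.
Lemma exFdx d z0 x0 x1 : (d < 2)%nat -> ex_RInt (fun x => Fd d x z0) x0 x1.
Proof. intros; apply (ex_RInt_x (Fd d)); apply C2_Fd; auto. Qed.

Ltac exstep := match goal with
 | |- ex_RInt (fun x => @?f x - @?g x) _ _ => apply (ex_RInt_minusR' f g)
 | |- ex_RInt (fun x => @?f x + @?g x) _ _ => apply (ex_RInt_plusR' f g)
 | |- ex_RInt (fun z => AS_dot _ _ _ _ ?x0 z _) _ _ => apply exASz
 | |- ex_RInt (fun x => AS_dot _ _ _ _ x ?z0 _) _ _ => apply exASx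
 | |- ex_RInt (fun z => Av_dot _ _ _ _ ?x0 z _) _ _ => apply exAvz
 | |- ex_RInt (fun x => Av_dot _ _ _ _ x ?z0 _) _ _ => apply exAvx
 | |- ex_RInt (fun z => Fd _ ?x0 z) _ _ => apply exFdz; lia
 | |- ex_RInt (fun x => Fd _ x ?z0) _ _ => apply exFdx; lia
 end.
Ltac c2step := first [ apply cA; split; lia | apply cS; [split; lia | lia] | apply cV; split; lia | vif ].
Ltac exsolve := repeat (first [exstep | c2step]).

Lemma Zpart :
  RInt (fun z => AS_dot M (a i j) (Sh t i j) 0 (xs (S i)) z (dtv v t i j) - AS_dot M (a (Nat.pred i) j) (Sh t (Nat.pred i) j) 0 (xs i) z (dtv v t i j)) (zs j) (zs (S j))
  + RInt (fun z => Av_dot M (a i j) (if Nat.ltb (S i) Nx then dtv v t (S i) j else zero3) 0 (xs (S i)) z (Sh t i j)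
                 - Av_dot M (a i j) (if Nat.ltb 0 i then dtv v t i j else zero3) 0 (xs i) z (Sh t i j)) (zs j) (zs (S j))
  - RInt (fun z => Fd 0 (xs (S i)) z - Fd 0 (xs i) z) (zs j) (zs (S j))
  = ER i j - (if Nat.ltb 0 i then ER (Nat.pred i) j else 0).
Proof. destruct Hij as [Hi Hj] eqn:Eij. destruct (cell_le i j Hij) as [Hx Hz].
  rewrite <- RInt_plusR, <- RInt_minusR by exsolve.
  unfold Fd, vd. destruct i as [|i'].
  - replace (Nat.ltb 0 0) with false by reflexivity. replace (Nat.pred 0) with 0%nat by reflexivity.
    rewrite Rminus_0_r. unfold ER. apply RInt_ext. intros z Hz'. rewrite Rmin_left, Rmax_right in Hz' by auto.
    rewrite (L1 M (a 0%nat j) (Sh t 0%nat j) 0 (xs 1%nat) z (dtv v t 0%nat j)) by (intros; apply Hsym; auto; lra).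
    rewrite (L1 M (a 0%nat j) (Sh t 0%nat j) 0 (xs 0%nat) z (dtv v t 0%nat j)) by (intros; apply Hsym; auto; lra).
    rewrite L3. unfold eR. lra.
  - replace (Nat.ltb 0 (S i')) with true by reflexivity. replace (Nat.pred (S i')) with i' by reflexivity.
    unfold ER. rewrite <- RInt_minusR by (unfold eR; exsolve).
    apply RInt_ext. intros z Hz'. rewrite Rmin_left, Rmax_right in Hz' by auto.
    assert (Hxi : xs i' <= xs (S i')) by (left; apply Hxs; lia).
    rewrite (L1 M (a (S i') j) (Sh t (S i') j) 0 (xs (S (S i'))) z (dtv v t (S i') j)) by (intros; apply Hsym; auto; lra).
    rewrite (L1 M (a i' j) (Sh t i' j) 0 (xs (S i')) z (dtv v t (S i') j)) by (intros; apply Hsym; auto; lia || lra).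
    unfold eR at 2. replace (Nat.ltb (S i') Nx) with true by (symmetry; apply Nat.ltb_lt; lia).
    rewrite (L2 M (a i' j) (dtv v t (S i') j) 0 (xs (S i')) z (Sh t i' j)).
    rewrite (L2 M (a (S i') j) (dtv v t (S i') j) 0 (xs (S i')) z (Sh t (S i') j)).
    unfold eR. lra. Qed.

Lemma Xpart :
  RInt (fun x => AS_dot M (a i j) (Sh t i j) 1 x (zs (S j)) (dtv v t i j) - AS_dot M (a i (Nat.pred j)) (Sh t i (Nat.pred j)) 1 x (zs j) (dtv v t i j)) (xs i) (xs (S i))
  + RInt (fun x => Av_dot M (a i j) (if Nat.ltb (S j) Nz then dtv v t i (S j) else zero3) 1 x (zs (S j)) (Sh t i j)
                 - Av_dot M (a i j) (if Nat.ltb 0 j then dtv v t i j else zero3) 1 x (zs j) (Sh t i j)) (xs i) (xs (S i))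
  - RInt (fun x => Fd 1 x (zs (S j)) - Fd 1 x (zs j)) (xs i) (xs (S i))
  = ET i j - (if Nat.ltb 0 j then ET i (Nat.pred j) else 0).
Proof. destruct Hij as [Hi Hj] eqn:Eij. destruct (cell_le i j Hij) as [Hx Hz].
  rewrite <- RInt_plusR, <- RInt_minusR by exsolve.
  unfold Fd, vd. destruct j as [|j'].
  - replace (Nat.ltb 0 0) with false by reflexivity. replace (Nat.pred 0) with 0%nat by reflexivity.
    rewrite Rminus_0_r. unfold ET. apply RInt_ext. intros x Hx'. rewrite Rmin_left, Rmax_right in Hx' by auto.
    rewrite (L1 M (a i 0%nat) (Sh t i 0%nat) 1 x (zs 1%nat) (dtv v t i 0%nat)) by (intros; apply Hsym; auto; lra).
    rewrite (L1 M (a i 0%nat) (Sh t i 0%nat) 1 x (zs 0%nat) (dtv v t i 0%nat)) by (intros; apply Hsym; auto; lra).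
    rewrite L3. unfold eT. lra.
  - replace (Nat.ltb 0 (S j')) with true by reflexivity. replace (Nat.pred (S j')) with j' by reflexivity.
    unfold ET. rewrite <- RInt_minusR by (unfold eT; exsolve).
    apply RInt_ext. intros x Hx'. rewrite Rmin_left, Rmax_right in Hx' by auto.
    assert (Hzj : zs j' <= zs (S j')) by (left; apply Hzs; lia).
    rewrite (L1 M (a i (S j')) (Sh t i (S j')) 1 x (zs (S (S j'))) (dtv v t i (S j'))) by (intros; apply Hsym; auto; lra).
    rewrite (L1 M (a i j') (Sh t i j') 1 x (zs (S j')) (dtv v t i (S j'))) by (intros; apply Hsym; auto; lia || lra).
    unfold eT at 2. replace (Nat.ltb (S j') Nz) with true by (symmetry; apply Nat.ltb_lt; lia).
    rewrite (L2 M (a i j') (dtv v t i (S j')) 1 x (zs (S j')) (Sh t i j')).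
    rewrite (L2 M (a i (S j')) (dtv v t i (S j')) 1 x (zs (S j')) (Sh t i (S j'))).
    unfold eT. lra. Qed.

Lemma T_eq :
  bnd1 M xs zs a (Sh t) i j (dtv v t i j) + bnd2 M Nx Nz xs zs a (dtv v t) i j (Sh t i j)
  - cintc i j (fun x z => Y1 x z + X23 (dtv v t) (Sh t i j) i j x z)
  = (ER i j - (if Nat.ltb 0 i then ER (Nat.pred i) j else 0)) + (ET i j - (if Nat.ltb 0 j then ET i (Nat.pred j) else 0)).
Proof. rewrite cell_div. unfold bnd1, bnd2. cbv zeta. rewrite arith4. rewrite Zpart, Xpart. reflexivity. Qed.

Definition Ev s := cintc i j (fun x z => sumR M (fun m => dtv v s i j m x z * dtv v s i j m x z)).

Lemma C2_dttv m : (m < M)%nat -> C2 (dttv v t i j m).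
Proof. intros. destruct Hij. exact (proj2 (Rep_C2 _ _ _ (dv_Rep i j m H0 H1 H))). Qed.

Lemma C2_Y1 : C2 Y1.
Proof. destruct Hij as [Hi Hj]. unfold Y1. apply C2_sumR; intros; apply C2_sumR; intros d Hd.
  apply C2_mult. apply C2_sumR; intros. apply C2_mult. apply a_C2; auto. apply cS; auto.
  destruct d; simpl. apply (poly_pdx_C2 k); apply vd_poly; auto. apply (poly_pdz_C2 k); apply vd_poly; auto. Qed.

Lemma Ev_deriv : is_derive Ev t (2 * (bnd1 M xs zs a (Sh t) i j (dtv v t i j) - cintc i j Y1)).
Proof. destruct (cell_le i j Hij) as [Hx Hz]. pose proof Hij as [Hi Hj].
  eapply is_derive_l. unfold Ev, cintc. apply Rep_cint; auto.
  apply (Rep_sumR t M (fun m s x z => dtv v s i j m x z * dtv v s i j m x z)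
     (fun m x z => dttv v t i j m x z * dtv v t i j m x z + dtv v t i j m x z * dttv v t i j m x z)).
  intros m Hm. apply (Rep_mult t (fun r => dtv v r i j m) _ (fun r => dtv v r i j m)); apply dv_Rep; auto.
  pose proof (Heq1 t i j (fun i' j' => dtv v t i' j') Ht Hi Hj (fun i' j' m Hi' Hj' Hm => dtv_poly t i' j' m Ht Hi' Hj' Hm)) as H.
  unfold ldg_eq1 in H. cbv beta in H. rewrite cint_plus in H; auto.
  2:{ apply C2_sumR; intros; apply C2_mult. apply C2_dttv; auto. apply cV; auto. }
  2:{ exact C2_Y1. }
  rewrite (cint_ext _ _ _ _ Hx Hz _ (fun x z => 2 * sumR M (fun m => dttv v t i j m x z * dtv v t i j m x z))).
  2:{ intros. rewrite <- sumR_scal_l. apply sumR_ext; intros; ring. }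
  rewrite cint_scal. 2,3: auto. 2:{ apply C2_sumR; intros; apply C2_mult. apply C2_dttv; auto. apply cV; auto. }
  unfold cintc, Y1, vd. lra. Qed.

Lemma cell_total : 2 * (bnd1 M xs zs a (Sh t) i j (dtv v t i j) - cintc i j Y1) + 2 * Lam i j (Sh t i j) =
  2 * ((ER i j - (if Nat.ltb 0 i then ER (Nat.pred i) j else 0)) + (ET i j - (if Nat.ltb 0 j then ET i (Nat.pred j) else 0))).
Proof. destruct (cell_le i j Hij) as [Hx Hz]. rewrite <- T_eq. unfold Lam, cintc.
  rewrite cint_plus; auto. lra. exact C2_Y1.
  apply C2_X23; auto. apply Wpoly_Sh; auto. intros; apply cV; auto. Qed.

End Cell2.

Lemma ER_last j : (0 < Nx)%nat -> ER (Nat.pred Nx) j = 0.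
Proof. intros H. unfold ER, eR. replace (Nat.ltb (S (Nat.pred Nx)) Nx) with false by (symmetry; apply Nat.ltb_ge; lia).
  rewrite (RInt_ext _ (fun _ => 0)) by (intros; apply L3). rewrite RInt_const. unfold scal; simpl; unfold mult; simpl; ring. Qed.
Lemma ET_last i : (0 < Nz)%nat -> ET i (Nat.pred Nz) = 0.
Proof. intros H. unfold ET, eT. replace (Nat.ltb (S (Nat.pred Nz)) Nz) with false by (symmetry; apply Nat.ltb_ge; lia).
  rewrite (RInt_ext _ (fun _ => 0)) by (intros; apply L3). rewrite RInt_const. unfold scal; simpl; unfold mult; simpl; ring. Qed.

Lemma energy_deriv : is_derive (energy M Nx Nz xs zs v Sh) t 0.
Proof.
  apply (is_derive_ext_loc (fun s => sumR Nx (fun i => sumR Nz (fun j => Ev i j s + ES i j s)))).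
  { apply (locally_ball t (mkposreal t Ht)). intros s Hs. simpl in Hs. pose proof (Rabs_def2 _ _ Hs) as [H1 H2].
    assert (Hs0 : 0 < s) by lra.
    unfold energy. apply sumR_ext; intros i Hi; apply sumR_ext; intros j Hj.
    assert (Hij : inR i j) by (split; auto). destruct (cell_le i j Hij) as [Hx Hz].
    unfold Ev, ES, cintc. rewrite cint_plus; auto.
    - apply C2_sumR; intros; apply C2_mult; apply (poly_C2 k); apply dtv_poly; auto.
    - apply C2_sumR; intros; apply C2_sumR; intros; apply C2_mult; apply (poly_C2 k); apply HS; auto. }
  eapply is_derive_l.
  { apply is_derive_sumR; intros i Hi; apply is_derive_sumR; intros j Hj.
    apply is_derive_plusR. apply Ev_deriv. split; auto. apply ES_deriv. split; auto. }
  rewrite (sumR_ext Nx _ (fun i => sumR Nz (fun j => 2 * ((ER i j - (if Nat.ltb 0 i then ER (Nat.pred i) j else 0))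
      + (ET i j - (if Nat.ltb 0 j then ET i (Nat.pred j) else 0)))))).
  2:{ intros i Hi; apply sumR_ext; intros j Hj. apply cell_total. split; auto. }
  rewrite (sumR_ext Nx _ (fun i => 2 * (sumR Nz (fun j => ER i j - (if Nat.ltb 0 i then ER (Nat.pred i) j else 0))
      + sumR Nz (fun j => ET i j - (if Nat.ltb 0 j then ET i (Nat.pred j) else 0))))).
  2:{ intros i Hi. rewrite <- sumR_plus, <- sumR_scal_l. reflexivity. }
  rewrite sumR_scal_l, sumR_plus, sumR_swap.
  destruct (Nat.eq_dec Nx 0) as [E0|Nx0].
  { rewrite E0. simpl. rewrite (sumR_zero Nz) by (intros; reflexivity). rring. }
  destruct (Nat.eq_dec Nz 0) as [F0|Nz0].
  { rewrite F0. simpl. rewrite (sumR_zero Nx) by (intros; reflexivity). rring. }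
  rewrite (sumR_ext Nz _ (fun _ => 0)).
  2:{ intros j Hj. transitivity (ER (Nat.pred Nx) j). apply (telescope Nx (fun i => ER i j)). lia. apply ER_last; lia. }
  rewrite (sumR_ext Nx (fun i => sumR Nz _) (fun _ => 0)).
  2:{ intros i Hi. transitivity (ET i (Nat.pred Nz)). apply (telescope Nz (fun j => ET i j)). lia. apply ET_last; lia. }
  rewrite !sumR_zero by auto. rring. Qed.
End Main.

Theorem theorem2
  (k M Nx Nz : nat) (xs zs : nat -> R)
  (a : nat -> nat -> nat -> nat -> R -> R -> R)
  (v : R -> nat -> nat -> nat -> R -> R -> R)
  (Sh : R -> nat -> nat -> nat -> nat -> R -> R -> R)
  (* mesh *)
  (Hxs : forall i, (i < Nx)%nat -> xs i < xs (S i))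
  (Hzs : forall j, (j < Nz)%nat -> zs j < zs (S j))
  (* A: smooth on each cell, symmetric positive definite *)
  (Hsmooth : forall i j k' l, (i < Nx)%nat -> (j < Nz)%nat ->
      (k' < M)%nat -> (l < M)%nat -> smooth2 (a i j k' l))
  (Hsym : forall i j k' l x z, (i < Nx)%nat -> (j < Nz)%nat ->
      (k' < M)%nat -> (l < M)%nat ->
      xs i <= x <= xs (S i) -> zs j <= z <= zs (S j) ->
      a i j k' l x z = a i j l k' x z)
  (Hpd : forall i j x z (xi : nat -> R), (i < Nx)%nat -> (j < Nz)%nat ->
      xs i <= x <= xs (S i) -> zs j <= z <= zs (S j) ->
      (exists m, (m < M)%nat /\ xi m <> 0) ->
      0 < sumR M (fun k' => sumR M (fun l => xi k' * a i j k' l x z * xi l)))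
  (* v_h(t) in V_h^k, with coefficients twice differentiable in t *)
  (Hv : exists c : R -> nat -> nat -> nat -> nat -> nat -> R,
      (forall t i j m x z, 0 < t -> (i < Nx)%nat -> (j < Nz)%nat -> (m < M)%nat ->
          v t i j m x z = poly2 k (c t i j m) x z) /\
      (forall t i j m p q, 0 < t ->
          ex_derive (fun s => c s i j m p q) t /\
          ex_derive (fun s => Derive (fun r => c r i j m p q) s) t))
  (* S_h(t) in (V_h^k)^2 *)
  (HS : forall t i j m d, 0 < t -> (i < Nx)%nat -> (j < Nz)%nat ->
      (m < M)%nat -> (d < 2)%nat -> is_poly2 k (Sh t i j m d))
  (* the LDG scheme *)
  (Heq1 : forall t i j (p : nat -> nat -> nat -> R -> R -> R), 0 < t ->
      (i < Nx)%nat -> (j < Nz)%nat ->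
      (forall i' j' m, (i' < Nx)%nat -> (j' < Nz)%nat -> (m < M)%nat ->
          is_poly2 k (p i' j' m)) ->
      ldg_eq1 M xs zs a v Sh t i j (p i j))
  (Heq2 : forall t i j (w : nat -> nat -> nat -> nat -> R -> R -> R), 0 < t ->
      (i < Nx)%nat -> (j < Nz)%nat ->
      (forall i' j' m d, (i' < Nx)%nat -> (j' < Nz)%nat -> (m < M)%nat ->
          (d < 2)%nat -> is_poly2 k (w i' j' m d)) ->
      ldg_eq2 M Nx Nz xs zs a v Sh t i j (w i j)) :
  forall t, 0 < t -> is_derive (energy M Nx Nz xs zs v Sh) t 0.
Proof.
  intros t Ht. destruct Hv as [c [Hvc Hvd]].
  exact (energy_deriv k M Nx Nz xs zs a v Sh c Hxs Hzs Hsmooth Hsym Hvc Hvd HS Heq1 Heq2 t Ht).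
Qed.
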